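(* (i) Let $(b_{ij})_{1\le i,j\le 3}$ be the canonical generators of $C(B_3^+)$. Then the linear span of $\{b_{mn}b_{st}: m,n,s,t\in\{1,2,3\}\}$ (the entries of $u_{B_3^+}^{\otimes2}=\sum_{m,n,s,t}b_{mn}b_{st}\otimes E_{mn}\otimes E_{st}$) has dimension $14$. (ii) Let $(o_{ij})_{1\le i,j\le 2}$ be the canonical generators of $C(O_2^+)$. Then the linear span of $\{o_{mn}o_{st}: m,n,s,t\in\{1,2\}\}$ (the entries of $u_{O_2^+}^{\otimes2}$) has dimension $10$.
   Context: $C(O_N^+)$ (free orthogonal quantum group) is the universal unital $C^*$-algebra generated by self-adjoint elements $o_{ij}$, $1\le i,j\le N$, such that the matrix $(o_{ij})$ is orthogonal, i.e. $\sum_k o_{ik}o_{jk}=\sum_k o_{ki}o_{kj}=\delta_{ij}\mathbb 1$. $C(B_N^+)$ (free bistochastic quantum group) is the universal unital $C^*$-algebra generated by self-adjoint $b_{ij}$, $1\le i,j\le N$, such that $(b_{ij})$ is orthogonal and every row and every column sums to $\mathbb 1$: $\sum_k b_{ik}=\sum_k b_{ki}=\mathbb 1$ for all $i$. (Equivalently these are the easy quantum groups of all non-crossing partitions with blocks of size $2$, resp. of size $1$ or $2$.) $E_{mn}$ denote matrix units. *)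

(* Defs.v *)
From HB Require Import structures.
From mathcomp Require Import all_boot all_order all_algebra all_field.
Set Implicit Arguments. Unset Strict Implicit. Unset Printing Implicit Defensive.
Import GRing.Theory Num.Theory.
Local Open Scope ring_scope.

Definition gen (N : nat) := ('I_N * 'I_N)%type.
Definition word (N : nat) := seq (gen N).
(* a noncommutative polynomial = formal finite sum of (coefficient, monomial) *)
Definition ncpoly (N : nat) := seq (algC * word N).

Definition nccoef N (p : ncpoly N) (w : word N) : algC :=
  \sum_(m <- p) (if m.2 == w then m.1 else 0).
Definition ncadd N (p q : ncpoly N) : ncpoly N := p ++ q.
Definition ncscale N (c : algC) (p : ncpoly N) : ncpoly N :=
  [seq (c * m.1, m.2) | m <- p].
Definition ncmul N (p q : ncpoly N) : ncpoly N :=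
  [seq (a.1 * b.1, a.2 ++ b.2) | a <- p, b <- q].
Definition ncsub N (p q : ncpoly N) : ncpoly N := ncadd p (ncscale (-1) q).
Definition ncone (N : nat) : ncpoly N := [:: (1, [::])].
Definition ncmono N (w : word N) : ncpoly N := [:: (1, w)].
Definition ncgen N (i j : 'I_N) : ncpoly N := [:: (1, [:: (i, j)])].
Definition ncsum N (s : seq (ncpoly N)) : ncpoly N := flatten s.
Definition nclin N (I : finType) (c : I -> algC) (F : I -> ncpoly N) : ncpoly N :=
  ncsum [seq ncscale (c i) (F i) | i <- enum I].

(* p lies in the two-sided ideal generated by rels:
   p = sum_k c_k * a_k * r_k * b_k  (as polynomials), with r_k in rels *)
Definition in_ideal N (rels : seq (ncpoly N)) (p : ncpoly N) : Prop :=
  exists t : seq (algC * word N * ncpoly N * word N),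
    (forall x, x \in t -> x.1.2 \in rels) /\
    forall w, nccoef p w =
      nccoef (ncsum [seq ncscale x.1.1.1
                       (ncmul (ncmul (ncmono x.1.1.2) x.1.2) (ncmono x.2))
                    | x <- t]) w.

Definition eqmod N (rels : seq (ncpoly N)) (p q : ncpoly N) : Prop :=
  in_ideal rels (ncsub p q).

Definition delta N (i j : 'I_N) : algC := (i == j)%:R.

Definition orth_rels (N : nat) : seq (ncpoly N) :=
  [seq ncsub (ncsum [seq ncmul (ncgen i k) (ncgen j k) | k <- enum 'I_N])
             (ncscale (delta i j) (ncone N)) | i <- enum 'I_N, j <- enum 'I_N]
  ++
  [seq ncsub (ncsum [seq ncmul (ncgen k i) (ncgen k j) | k <- enum 'I_N])
             (ncscale (delta i j) (ncone N)) | i <- enum 'I_N, j <- enum 'I_N].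

Definition bist_rels (N : nat) : seq (ncpoly N) :=
  orth_rels N
  ++ [seq ncsub (ncsum [seq ncgen i k | k <- enum 'I_N]) (ncone N) | i <- enum 'I_N]
  ++ [seq ncsub (ncsum [seq ncgen k i | k <- enum 'I_N]) (ncone N) | i <- enum 'I_N].

Definition span_dim N (rels : seq (ncpoly N)) (I : finType) (F : I -> ncpoly N)
    (d : nat) : Prop :=
  exists e : 'I_d -> ncpoly N,
    (forall k, exists c : I -> algC, eqmod rels (e k) (nclin c F)) /\
    (forall a : 'I_d -> algC, in_ideal rels (nclin a e) -> forall k, a k = 0) /\
    (forall i, exists a : 'I_d -> algC, eqmod rels (F i) (nclin a e)).

Definition tensor2_entries (N : nat) (x : 'I_N * 'I_N * 'I_N * 'I_N) : ncpoly N :=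
  ncmul (ncgen x.1.1.1 x.1.1.2) (ncgen x.1.2 x.2).

(* Main.v *)
Require Import Defs.
From HB Require Import structures.
From mathcomp Require Import all_boot all_order all_algebra all_field.
From mathcomp Require Import ring.
Set Implicit Arguments. Unset Strict Implicit. Unset Printing Implicit Defensive.
Import GRing.Theory Num.Theory.
Local Open Scope ring_scope.

Section Gen.
Variables (R : comNzRingType) (N : nat).
Definition gpoly := seq (R * word N).
Definition gscale (c : R) (p : gpoly) : gpoly := [seq (c * m.1, m.2) | m <- p].
Definition gmul (p q : gpoly) : gpoly := [seq (a.1 * b.1, a.2 ++ b.2) | a <- p, b <- q].
Definition gsub (p q : gpoly) : gpoly := p ++ gscale (-1) q.
Definition gone : gpoly := [:: (1, [::])].
Definition gmono (w : word N) : gpoly := [:: (1, w)].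
Definition ggen (i j : 'I_N) : gpoly := [:: (1, [:: (i, j)])].
Definition gorth (e : seq 'I_N) : seq gpoly :=
  [seq gsub (flatten [seq gmul (ggen i k) (ggen j k) | k <- e]) (gscale (i == j)%:R gone) | i <- e, j <- e]
  ++ [seq gsub (flatten [seq gmul (ggen k i) (ggen k j) | k <- e]) (gscale (i == j)%:R gone) | i <- e, j <- e].
Definition gbist (e : seq 'I_N) : seq gpoly := gorth e
  ++ [seq gsub (flatten [seq ggen i k | k <- e]) gone | i <- e]
  ++ [seq gsub (flatten [seq ggen k i | k <- e]) gone | i <- e].
Definition gtensor (x : 'I_N * 'I_N * 'I_N * 'I_N) : gpoly :=
  gmul (ggen x.1.1.1 x.1.1.2) (ggen x.1.2 x.2).
Definition gexpr (rels : seq gpoly) (t : seq (R * word N * nat * word N)) : gpoly :=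
  flatten [seq gscale x.1.1.1 (gmul (gmul (gmono x.1.1.2) (nth [::] rels x.1.2)) (gmono x.2)) | x <- t].
Definition gcoef (p : gpoly) (w : word N) : R :=
  foldr (fun m acc => if m.2 == w then m.1 + acc else acc) 0 p.
Definition coef_eq (p q : gpoly) : bool :=
  all (fun w => gcoef p w == gcoef q w) (map snd (p ++ q)).
Definition checkI (rels : seq gpoly) (p : gpoly) t : bool :=
  all (fun x => x.1.2 < size rels)%N t && coef_eq p (gexpr rels t).
End Gen.

Lemma orth_conv N : orth_rels N = @gorth algC N (enum 'I_N). Proof. by []. Qed.
Lemma bist_conv N : bist_rels N = @gbist algC N (enum 'I_N). Proof. by []. Qed.
Lemma tensor_conv N x : @tensor2_entries N x = @gtensor algC N x. Proof. by []. Qed.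

Section Map.
Variables (R S : comNzRingType) (f : {rmorphism R -> S}) (N : nat).
Definition pmapR (p : gpoly R N) : gpoly S N := [seq (f m.1, m.2) | m <- p].
Lemma pmapR_cat p q : pmapR (p ++ q) = pmapR p ++ pmapR q. Proof. exact: map_cat. Qed.
Lemma pmapR_flatten ps : pmapR (flatten ps) = flatten (map pmapR ps).
Proof. by elim: ps => //= p ps IH; rewrite pmapR_cat IH. Qed.
Lemma pmapR_scale c p : pmapR (gscale c p) = gscale (f c) (pmapR p).
Proof. by elim: p => //= m p IH; rewrite IH rmorphM. Qed.
Lemma pmapR_mul p q : pmapR (gmul p q) = gmul (pmapR p) (pmapR q).
Proof.
elim: p => //= a p IH; rewrite /gmul !allpairs_cons pmapR_cat -/(gmul _ _) IH.
congr (_ ++ _); rewrite /pmapR -!map_comp; apply: eq_map => b /=; by rewrite rmorphM.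
Qed.
Lemma pmapR_sub p q : pmapR (gsub p q) = gsub (pmapR p) (pmapR q).
Proof. by rewrite /gsub pmapR_cat pmapR_scale rmorphN1. Qed.
Lemma pmapR_one : pmapR (@gone R N) = @gone S N. Proof. by rewrite /pmapR /= rmorph1. Qed.
Lemma pmapR_gen i j : pmapR (@ggen R N i j) = @ggen S N i j. Proof. by rewrite /pmapR /= rmorph1. Qed.
Lemma pmapR_mono w : pmapR (@gmono R N w) = @gmono S N w. Proof. by rewrite /pmapR /= rmorph1. Qed.
Lemma pmapR_tensor x : pmapR (@gtensor R N x) = @gtensor S N x.
Proof. by rewrite /gtensor pmapR_mul !pmapR_gen. Qed.
Lemma map_gorth e : map pmapR (@gorth R N e) = @gorth S N e.
Proof.
rewrite /gorth map_cat !map_allpairs; congr (_ ++ _); apply: eq_allpairs => i j;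
rewrite pmapR_sub pmapR_scale pmapR_one rmorph_nat pmapR_flatten -map_comp;
  congr (gsub (flatten _) _); apply: eq_map => k;
  by rewrite [LHS]/comp pmapR_mul !pmapR_gen.
Qed.
Lemma map_gbist e : map pmapR (@gbist R N e) = @gbist S N e.
Proof.
rewrite /gbist map_cat map_gorth !map_cat -!map_comp; congr (_ ++ (_ ++ _)); apply: eq_map => i /=;
by rewrite pmapR_sub pmapR_one pmapR_flatten -map_comp; congr (gsub (flatten _) _);
  apply: eq_map => k; by rewrite [LHS]/comp pmapR_gen.
Qed.
Lemma gcoef_map p w : gcoef (pmapR p) w = f (gcoef p w).
Proof. by elim: p => [|m p IH] /=; rewrite ?rmorph0 // IH; case: ifP; rewrite ?rmorphD. Qed.
End Map.
Arguments pmapR {R S} f {N} p.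

Section M2.
Variable R : comNzRingType.
Record m2 := M2 { a11 : R; a12 : R; a21 : R; a22 : R }.
Definition m2add (A B : m2) := M2 (a11 A + a11 B) (a12 A + a12 B) (a21 A + a21 B) (a22 A + a22 B).
Definition m2scale (c : R) (A : m2) := M2 (c * a11 A) (c * a12 A) (c * a21 A) (c * a22 A).
Definition m2mul (A B : m2) := M2 (a11 A * a11 B + a12 A * a21 B) (a11 A * a12 B + a12 A * a22 B)
  (a21 A * a11 B + a22 A * a21 B) (a21 A * a12 B + a22 A * a22 B).
Definition m2zero := M2 0 0 0 0.
Definition m2one := M2 1 0 0 1.
Definition m2comp (c : nat) (A : m2) : R :=
  match c with 0 => a11 A | 1 => a12 A | 2 => a21 A | _ => a22 A end%N.
Definition m2eqb (A B : m2) : bool :=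
  [&& a11 A == a11 B, a12 A == a12 B, a21 A == a21 B & a22 A == a22 B].
Lemma m2eqbP A B : m2eqb A B -> A = B.
Proof. by case: A B => ? ? ? ? [? ? ? ?] /and4P[/eqP/= -> /eqP/= -> /eqP/= -> /eqP/= ->]. Qed.
Lemma m2mulA A B C : m2mul A (m2mul B C) = m2mul (m2mul A B) C.
Proof. case: A B C => ? ? ? ? [? ? ? ?] [? ? ? ?]; rewrite /m2mul /=; congr M2; ring. Qed.
Lemma m2mul1l A : m2mul m2one A = A.
Proof. case: A => ? ? ? ?; rewrite /m2mul /=; congr M2; ring. Qed.
Lemma m2mul0l A : m2mul m2zero A = m2zero.
Proof. case: A => ? ? ? ?; rewrite /m2mul /=; congr M2; ring. Qed.
Lemma m2mul0r A : m2mul A m2zero = m2zero.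
Proof. case: A => ? ? ? ?; rewrite /m2mul /=; congr M2; ring. Qed.
Lemma m2addA A B C : m2add A (m2add B C) = m2add (m2add A B) C.
Proof. case: A B C => ? ? ? ? [? ? ? ?] [? ? ? ?]; rewrite /m2add /=; congr M2; ring. Qed.
Lemma m2add0l A : m2add m2zero A = A.
Proof. case: A => ? ? ? ?; rewrite /m2add /=; congr M2; ring. Qed.
Lemma m2mulDr A B C : m2mul A (m2add B C) = m2add (m2mul A B) (m2mul A C).
Proof. case: A B C => ? ? ? ? [? ? ? ?] [? ? ? ?]; rewrite /m2mul /m2add /=; congr M2; ring. Qed.
Lemma m2scaleD c A B : m2scale c (m2add A B) = m2add (m2scale c A) (m2scale c B).
Proof. case: A B => ? ? ? ? [? ? ? ?]; rewrite /m2scale /m2add /=; congr M2; ring. Qed.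
Lemma m2scaleA c d A : m2scale (c * d) A = m2scale c (m2scale d A).
Proof. case: A => ? ? ? ?; rewrite /m2scale /=; congr M2; ring. Qed.
Lemma m2scale0 c : m2scale c m2zero = m2zero.
Proof. rewrite /m2scale /=; congr M2; ring. Qed.
Lemma m2scale1 A : m2scale 1 A = A.
Proof. case: A => ? ? ? ?; rewrite /m2scale /=; congr M2; ring. Qed.
Lemma m2mulZZ c d A B : m2mul (m2scale c A) (m2scale d B) = m2scale (c * d) (m2mul A B).
Proof. case: A B => ? ? ? ? [? ? ? ?]; rewrite /m2scale /m2mul /=; congr M2; ring. Qed.
Lemma m2mulZl c A B : m2mul (m2scale c A) B = m2scale c (m2mul A B).
Proof. case: A B => ? ? ? ? [? ? ? ?]; rewrite /m2scale /m2mul /=; congr M2; ring. Qed.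
Lemma m2compD c A B : m2comp c (m2add A B) = m2comp c A + m2comp c B.
Proof. by case: c => [|[|[|c]]]. Qed.
Lemma m2compZ c x A : m2comp c (m2scale x A) = x * m2comp c A.
Proof. by case: c => [|[|[|c]]]. Qed.
Lemma m2comp0 c : m2comp c m2zero = 0.
Proof. by case: c => [|[|[|c]]]. Qed.
Lemma m2_ext A B : (forall c, (c < 4)%N -> m2comp c A = m2comp c B) -> A = B.
Proof.
case: A B => ? ? ? ? [? ? ? ?] H.
by move: (H 0%N isT) (H 1%N isT) (H 2%N isT) (H 3%N isT) => /= -> -> -> ->.
Qed.

Variables (N : nat) (rho : 'I_N * 'I_N -> m2).
Definition ev (w : word N) : m2 := foldr (fun g acc => m2mul (rho g) acc) m2one w.
Definition phi (p : gpoly R N) : m2 := foldr (fun m acc => m2add (m2scale m.1 (ev m.2)) acc) m2zero p.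
Lemma ev_cat w1 w2 : ev (w1 ++ w2) = m2mul (ev w1) (ev w2).
Proof. elim: w1 => [|g w1 IH] /=; first by rewrite m2mul1l. by rewrite IH m2mulA. Qed.
Lemma phi_cat p q : phi (p ++ q) = m2add (phi p) (phi q).
Proof. elim: p => [|m p IH] /=; first by rewrite m2add0l. by rewrite IH m2addA. Qed.
Lemma phi_scale c p : phi (gscale c p) = m2scale c (phi p).
Proof. elim: p => [|m p IH] /=; first by rewrite m2scale0. by rewrite IH m2scaleD m2scaleA. Qed.
Lemma phi_mulmap a1 a2 q : phi [seq (a1 * b.1, a2 ++ b.2) | b <- q] = m2mul (m2scale a1 (ev a2)) (phi q).
Proof.
elim: q => [|b q IH] /=; first by rewrite m2mul0r.
by rewrite IH m2mulDr ev_cat m2mulZZ.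
Qed.
Lemma phi_mul p q : phi (gmul p q) = m2mul (phi p) (phi q).
Proof.
elim: p => [|a p IH] /=; first by rewrite m2mul0l.
rewrite /gmul allpairs_cons phi_cat -/(gmul _ _) IH phi_mulmap.
case: (phi p) (phi q) (m2scale _ _) => ? ? ? ? [? ? ? ?] [? ? ? ?].
rewrite /m2mul /m2add /=; congr M2; ring.
Qed.
Lemma phi_mono w : phi (gmono R w) = ev w.
Proof. rewrite /= m2scale1; case: (ev w) => ? ? ? ?; rewrite /m2add /=; congr M2; ring. Qed.
Lemma phi_comp c p : m2comp c (phi p) = \sum_(m <- p) m.1 * m2comp c (ev m.2).
Proof.
elim: p => [|m p IH] /=; first by rewrite big_nil m2comp0.
by rewrite big_cons m2compD m2compZ IH.
Qed.
Lemma phi_flatten_comp c ps : m2comp c (phi (flatten ps)) = \sum_(p <- ps) m2comp c (phi p).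
Proof.
elim: ps => [|p ps IH] /=; first by rewrite big_nil m2comp0.
by rewrite big_cons phi_cat m2compD IH.
Qed.
End M2.

Section Coef.
Variables (R : comNzRingType) (N : nat).
Definition scoef (p : gpoly R N) (w : word N) : R :=
  \sum_(m <- p) (if m.2 == w then m.1 else 0).
Lemma coef_sum (p : gpoly R N) (f : word N -> R) (s : seq (word N)) :
  uniq s -> {subset map snd p <= s} ->
  \sum_(m <- p) m.1 * f m.2 = \sum_(w <- s) scoef p w * f w.
Proof.
move=> us sub.
under [RHS]eq_bigr do rewrite /scoef mulr_suml.
rewrite exchange_big /= big_seq [RHS]big_seq; apply: eq_bigr => m mp.
have ms : m.2 \in s by apply: sub; apply: map_f.
rewrite (bigD1_seq m.2) //= eqxx big1 ?addr0 // => w wn.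
by rewrite eq_sym (negbTE wn) mul0r.
Qed.
Lemma scoef_phi (rho : 'I_N * 'I_N -> m2 R) (p q : gpoly R N) :
  (forall w, scoef p w = scoef q w) -> phi rho p = phi rho q.
Proof.
move=> H; apply: m2_ext => c _; rewrite !phi_comp.
set s := undup (map snd (p ++ q)).
have us : uniq s by apply: undup_uniq.
rewrite (@coef_sum p (fun w => m2comp c (ev rho w)) s us) ?(@coef_sum q (fun w => m2comp c (ev rho w)) s us).
- by apply: eq_bigr => w _; rewrite H.
- by move=> w wq; rewrite mem_undup map_cat mem_cat wq orbT.
- by move=> w wp; rewrite mem_undup map_cat mem_cat wp.
Qed.
Lemma scoef_gcoef p w : scoef p w = gcoef p w.
Proof.
elim: p => [|m p IH]; first by rewrite /scoef big_nil.
by rewrite /scoef big_cons -/(scoef p w) IH /=; case: ifP => // _; rewrite add0r.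
Qed.
End Coef.

Lemma nccoef_scoef N p w : @nccoef N p w = scoef p w. Proof. by []. Qed.

Lemma phi_ideal N (rels : seq (ncpoly N)) (rho : 'I_N * 'I_N -> m2 algC) p :
  (forall r, r \in rels -> phi rho r = m2zero _) -> in_ideal rels p -> phi rho p = m2zero _.
Proof.
move=> Hr [t [Ht Hc]].
rewrite (@scoef_phi _ _ rho p (ncsum [seq ncscale x.1.1.1
                       (ncmul (ncmul (ncmono x.1.1.2) x.1.2) (ncmono x.2)) | x <- t])) //.
elim: t Ht {Hc} => [|x t IH] Ht //=.
rewrite (phi_cat rho) IH; last by move=> y yt; apply: Ht; rewrite inE yt orbT.
have E1 : forall a b : ncpoly N, ncmul a b = gmul a b by [].
have E2 : forall c (a : ncpoly N), ncscale c a = gscale c a by [].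
rewrite !E1 E2 (phi_scale rho) (phi_mul rho) (phi_mul rho) (Hr _ (Ht x (mem_head _ _))).
by rewrite m2mul0r m2mul0l m2scale0 m2add0l.
Qed.

Section MapM2.
Variables (R S : comNzRingType) (f : {rmorphism R -> S}) (N : nat).
Definition m2map (A : m2 R) : m2 S := M2 (f (a11 A)) (f (a12 A)) (f (a21 A)) (f (a22 A)).
Lemma m2map_mul A B : m2map (m2mul A B) = m2mul (m2map A) (m2map B).
Proof. by rewrite /m2map /= !rmorphD !rmorphM. Qed.
Lemma m2map_add A B : m2map (m2add A B) = m2add (m2map A) (m2map B).
Proof. by rewrite /m2map /= !rmorphD. Qed.
Lemma m2map_scale c A : m2map (m2scale c A) = m2scale (f c) (m2map A).
Proof. by rewrite /m2map /= !rmorphM. Qed.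
Lemma m2map_zero : m2map (m2zero R) = m2zero S.
Proof. by rewrite /m2map /= !rmorph0. Qed.
Lemma m2map_one : m2map (m2one R) = m2one S.
Proof. by rewrite /m2map /= !rmorph0 !rmorph1. Qed.
Variable rho : 'I_N * 'I_N -> m2 R.
Lemma ev_map w : ev (fun g => m2map (rho g)) w = m2map (ev rho w).
Proof. by elim: w => [|g w IH] /=; rewrite ?m2map_one // IH m2map_mul. Qed.
Lemma phi_map p : phi (fun g => m2map (rho g)) (pmapR f p) = m2map (phi rho p).
Proof. by elim: p => [|m p IH] /=; rewrite ?m2map_zero // IH ev_map m2map_add m2map_scale. Qed.
End MapM2.

Section Transfer.
Variables (R : comNzRingType) (f : {rmorphism R -> algC}) (N : nat).
Lemma gcoef_notin (p : gpoly R N) w : w \notin map snd p -> gcoef p w = 0.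
Proof.
elim: p => [|m p IH] //=; rewrite inE negb_or => /andP[nw /IH ->].
by rewrite eq_sym (negbTE nw).
Qed.
Lemma coef_eqP (p q : gpoly R N) : coef_eq p q -> forall w, gcoef p w = gcoef q w.
Proof.
move=> /allP H w; case: (boolP (w \in map snd (p ++ q))) => [/H/eqP //|].
by rewrite map_cat mem_cat negb_or => /andP[/gcoef_notin -> /gcoef_notin ->].
Qed.
Lemma gexpr_map (rels : seq (gpoly R N)) t :
  pmapR f (gexpr rels t) =
  ncsum [seq ncscale x.1.1.1 (ncmul (ncmul (ncmono x.1.1.2) x.1.2) (ncmono x.2))
        | x <- [seq (f y.1.1.1, y.1.1.2, pmapR f (nth [::] rels y.1.2), y.2) | y <- t]].
Proof.
rewrite /gexpr pmapR_flatten -!map_comp /ncsum; congr flatten; apply: eq_map => y.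
by rewrite /= pmapR_scale !pmapR_mul !pmapR_mono.
Qed.
Lemma transfer_ideal (rels : seq (gpoly R N)) p t :
  checkI rels p t -> in_ideal (map (pmapR f) rels) (pmapR f p).
Proof.
case/andP=> /allP Hs Hc.
exists [seq (f y.1.1.1, y.1.1.2, pmapR f (nth [::] rels y.1.2), y.2) | y <- t]; split.
  move=> x /mapP[y yt ->] /=; apply: map_f; apply: mem_nth; exact: Hs.
move=> w; rewrite -gexpr_map !nccoef_scoef !scoef_gcoef !gcoef_map.
by rewrite (coef_eqP Hc).
Qed.
Lemma transfer_eqmod (rels : seq (gpoly R N)) p q t :
  checkI rels (gsub p q) t -> eqmod (map (pmapR f) rels) (pmapR f p) (pmapR f q).
Proof. by move=> /(transfer_ideal) H; rewrite /eqmod; move: H; rewrite pmapR_sub. Qed.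
End Transfer.

Lemma nccoef_cat N (p q : ncpoly N) w : nccoef (p ++ q) w = nccoef p w + nccoef q w.
Proof. by rewrite /nccoef big_cat. Qed.
Lemma nccoef_scale N c (p : ncpoly N) w : nccoef (ncscale c p) w = c * nccoef p w.
Proof.
rewrite /nccoef big_map mulr_sumr; apply: eq_bigr => m _ /=.
by case: ifP; rewrite ?mulr0.
Qed.
Lemma nccoef_flatten N (ps : seq (ncpoly N)) w : nccoef (flatten ps) w = \sum_(p <- ps) nccoef p w.
Proof.
elim: ps => [|p ps IH] /=; first by rewrite /nccoef !big_nil.
by rewrite nccoef_cat IH big_cons.
Qed.

Lemma eqmod_self N rels (I : finType) (F : I -> ncpoly N) (j : I) :
  eqmod rels (F j) (nclin (fun i => (i == j)%:R) F).
Proof.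
exists [::]; split => // w.
rewrite /ncsub /ncadd nccoef_cat nccoef_scale /nclin /ncsum nccoef_flatten big_map.
rewrite (bigD1_seq j) ?mem_enum ?enum_uniq //= nccoef_scale eqxx mul1r.
rewrite big1 ?addr0; last by move=> i /negbTE ->; rewrite nccoef_scale mul0r.
by rewrite /nccoef big_nil mulN1r subrr.
Qed.

(* computable ordinals *)
Definition ordsub n i : option 'I_n :=
  (if (i < n)%N as b return (i < n)%N = b -> option 'I_n then fun H => Some (Ordinal H)
   else fun _ => None) erefl.
Definition ords n : seq 'I_n := pmap (@ordsub n) (iota 0 n).
Lemma enum_ords n : map val (ords n) = iota 0 n -> enum 'I_n = ords n.
Proof. by move=> H; apply: (inj_map val_inj); rewrite val_enum_ord H. Qed.

Lemma sum_foldr (R : nmodType) (I : Type) (s : seq I) (g : I -> R) :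
  foldr (fun j acc => g j + acc) 0 s = \sum_(j <- s) g j.
Proof. by elim: s => [|x s IH]; rewrite ?big_nil ?big_cons //= IH. Qed.

Definition quad N := ('I_N * 'I_N * 'I_N * 'I_N)%type.
Definition allI N : seq (quad N) :=
  let P := [seq (a, b) | a <- ords N, b <- ords N] in
  [seq (ab.1, ab.2, cd.1, cd.2) | ab <- P, cd <- P].
Lemma allI_all N (P : pred (quad N)) : map val (ords N) = iota 0 N -> all P (allI N) -> forall i, P i.
Proof.
move=> /enum_ords E /allP H [[[a b] c] d]; apply: H.
have mO : forall x : 'I_N, x \in ords N by move=> x; rewrite -E mem_enum.
have Pab : (a, b) \in [seq (a, b) | a <- ords N, b <- ords N] by apply: allpairs_f.
have Pcd : (c, d) \in [seq (a, b) | a <- ords N, b <- ords N] by apply: allpairs_f.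
exact: (allpairs_f (fun ab cd => (ab.1, ab.2, cd.1, cd.2)) Pab Pcd).
Qed.

Lemma m2comp_map (R S : comNzRingType) (f : {rmorphism R -> S}) c A :
  m2comp c (m2map f A) = f (m2comp c A).
Proof. by case: c => [|[|[|c]]]. Qed.

Section Main.
Variables (N d : nat) (rels : seq (ncpoly N)) (relsQ : seq (gpoly rat N)) (bidx : 'I_d -> quad N)
  (repsQ : nat -> 'I_N * 'I_N -> m2 rat) (J : seq (nat * nat))
  (L : 'I_d -> nat -> rat) (aQ : quad N -> 'I_d -> rat)
  (tQ : quad N -> seq (rat * word N * nat * word N)).
Definition Qv (j : nat) (k : 'I_d) : rat :=
  m2comp (nth (0, 0)%N J j).2 (phi (repsQ (nth (0, 0)%N J j).1) (gtensor rat (bidx k))).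

Lemma main_span :
  rels = map (pmapR (@ratr algC)) relsQ ->
  map val (ords d) = iota 0 d ->
  map val (ords N) = iota 0 N ->
  all (fun rr => all (fun r => m2eqb (phi (repsQ rr) r) (m2zero _)) relsQ) (map fst J) ->
  all (fun k0 => all (fun k => foldr (fun j acc => L k0 j * Qv j k + acc) 0 (iota 0 (size J))
                       == (k == k0)%:R) (ords d)) (ords d) ->
  all (fun i => checkI relsQ (gsub (gtensor rat i)
         (flatten [seq gscale (aQ i k) (gtensor rat (bidx k)) | k <- ords d])) (tQ i)) (allI N) ->
  span_dim rels (@tensor2_entries N) d.
Proof.
move=> Erels Eenum EN Hkill HL HC.
have Ef : forall x, @tensor2_entries N x = pmapR ratr (gtensor rat x).
  by move=> x; rewrite tensor_conv pmapR_tensor.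
have Ed := enum_ords Eenum.
have uO : uniq (ords d) by rewrite -Ed enum_uniq.
have mO : forall k : 'I_d, k \in ords d by move=> k; rewrite -Ed mem_enum.
exists (fun k => @tensor2_entries N (bidx k)); split; [|split].
- move=> k; exists (fun i => (i == bidx k)%:R); exact: eqmod_self.
- move=> a Ha k0.
  have H0 : forall j, j \in iota 0 (size J) -> \sum_(k <- ords d) a k * ratr (Qv j k) = 0.
    move=> j; rewrite mem_iota add0n => /andP[_ jlt].
    set rr := (nth (0, 0)%N J j).1; set c := (nth (0, 0)%N J j).2.
    have Hrr : rr \in map fst J by apply: map_f; apply: mem_nth.
    have Kill : forall r, r \in rels -> phi (fun g => m2map ratr (repsQ rr g)) r = m2zero _.
      move=> r; rewrite Erels => /mapP[r' r'in ->]; rewrite phi_map.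
      have := allP (allP Hkill rr Hrr) r' r'in => /m2eqbP ->.
      exact: m2map_zero.
    have := phi_ideal Kill Ha; move/(congr1 (m2comp c)).
    rewrite m2comp0 /nclin /ncsum phi_flatten_comp Ed big_map => H.
    apply: (etrans _ H); apply: eq_bigr => k _.
    have E2 : forall x (y : ncpoly N), ncscale x y = gscale x y by [].
    by rewrite E2 phi_scale m2compZ Ef phi_map m2comp_map.
  have HLk : forall k, k \in ords d -> \sum_(j <- iota 0 (size J)) L k0 j * Qv j k = (k == k0)%:R.
    by move=> k kin; rewrite -sum_foldr; apply/eqP; exact: (allP (allP HL k0 (mO k0)) k kin).
  transitivity (\sum_(k <- ords d) a k * ratr ((k == k0)%:R : rat)).
    rewrite (bigD1_seq k0) //= eqxx rmorph1 mulr1 big1 ?addr0 //.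
    by move=> k /negbTE ->; rewrite rmorph0 mulr0.
  rewrite big_seq; under eq_bigr => k kin do rewrite -(HLk k kin) rmorph_sum mulr_sumr.
  rewrite -big_seq exchange_big big1_seq //= => j jin.
  under eq_bigr => k _ do rewrite rmorphM mulrCA.
  by rewrite -mulr_sumr H0 ?mulr0.
- move=> i; exists (fun k => ratr (aQ i k)).
  have -> : nclin (fun k => ratr (aQ i k)) (fun k => @tensor2_entries N (bidx k)) =
      pmapR ratr (flatten [seq gscale (aQ i k) (gtensor rat (bidx k)) | k <- ords d]).
    rewrite /nclin /ncsum Ed pmapR_flatten -map_comp; congr flatten; apply: eq_map => k.
    by rewrite [RHS]/comp pmapR_scale -Ef.
  rewrite Ef Erels; apply: transfer_eqmod.
  exact: (allI_all (P := fun i => checkI relsQ (gsub (gtensor rat i)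
         (flatten [seq gscale (aQ i k) (gtensor rat (bidx k)) | k <- ords d])) (tQ i)) EN HC i).
Qed.
End Main.

Definition qp (n d : nat) : rat := n%:R / d%:R.
Definition qn (n d : nat) : rat := - (n%:R / d%:R).
Definition oN (n k : nat) : 'I_n.+1 := nth ord0 (ords n.+1) k.
Definition gq (n c : nat) : 'I_n.+1 * 'I_n.+1 := (oN n (c %/ n.+1), oN n (c %% n.+1)).
Definition qd (n c : nat) : quad n.+1 :=
  (gq n (c %/ (n.+1 * n.+1)), oN n ((c %/ n.+1) %% n.+1), oN n (c %% n.+1)).
Definition qcode n (i : quad n) : nat :=
  (val i.1.1.1 * n * n * n + val i.1.1.2 * n * n + val i.1.2 * n + val i.2)%N.
Definition mkrep n (reps : seq (seq (seq rat))) (rr : nat) (g : 'I_n.+1 * 'I_n.+1) : m2 rat :=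
  let l := nth [::] (nth [::] reps rr) (val g.1 * n.+1 + val g.2) in
  M2 (nth 0 l 0) (nth 0 l 1) (nth 0 l 2) (nth 0 l 3).
Definition mkL d (tab : seq (seq rat)) (k0 : 'I_d) (j : nat) : rat := nth 0 (nth [::] tab k0) j.
Definition mkA n d (tab : seq (seq rat)) (i : quad n.+1) (k : 'I_d) : rat :=
  nth 0 (nth [::] tab (qcode i)) k.
Definition mkT n (tab : seq (seq (rat * seq nat * nat * seq nat))) (i : quad n.+1)
  : seq (rat * word n.+1 * nat * word n.+1) :=
  map (fun x => (x.1.1.1, map (gq n) x.1.1.2, x.1.2, map (gq n) x.2)) (nth [::] tab (qcode i)).

Definition O2_reps : seq (seq (seq rat)) := [:: [:: [:: (qn 1 1); (qn 1 1); (qn 1 1); (qp 1 1)]; [:: (qp 0 1); (qn 1 1); (qp 1 1); (qp 0 1)]; [:: (qp 0 1); (qn 1 1); (qp 1 1); (qp 0 1)]; [:: (qn 1 1); (qn 1 1); (qn 1 1); (qp 1 1)]];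
 [:: [:: (qn 1 1); (qn 1 1); (qn 1 1); (qp 1 1)]; [:: (qp 0 1); (qn 1 1); (qp 1 1); (qp 0 1)]; [:: (qp 0 1); (qp 1 1); (qn 1 1); (qp 0 1)]; [:: (qp 1 1); (qp 1 1); (qp 1 1); (qn 1 1)]];
 [:: [:: (qn 1 1); (qn 1 1); (qp 0 1); (qp 0 1)]; [:: (qp 0 1); (qn 1 1); (qp 0 1); (qp 1 1)]; [:: (qp 0 1); (qn 1 1); (qp 0 1); (qp 1 1)]; [:: (qn 1 1); (qn 1 1); (qp 0 1); (qp 0 1)]];
 [:: [:: (qn 1 1); (qn 1 1); (qp 0 1); (qp 0 1)]; [:: (qp 0 1); (qn 1 1); (qp 0 1); (qp 1 1)]; [:: (qp 0 1); (qn 1 1); (qp 0 1); (qp 1 1)]; [:: (qp 1 1); (qp 1 1); (qp 0 1); (qp 0 1)]];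
 [:: [:: (qn 1 1); (qn 1 1); (qp 0 1); (qp 1 1)]; [:: (qn 1 1); (qn 1 1); (qp 1 1); (qp 1 1)]; [:: (qp 0 1); (qp 0 1); (qn 1 1); (qp 0 1)]; [:: (qp 1 1); (qp 1 1); (qp 0 1); (qn 1 1)]];
 [:: [:: (qn 1 1); (qn 1 1); (qp 0 1); (qp 1 1)]; [:: (qn 1 1); (qn 1 1); (qp 1 1); (qp 1 1)]; [:: (qp 0 1); (qp 0 1); (qp 1 1); (qp 0 1)]; [:: (qn 1 1); (qn 1 1); (qp 0 1); (qp 1 1)]];
 [:: [:: (qn 1 1); (qn 1 1); (qp 0 1); (qp 1 1)]; [:: (qp 0 1); (qn 1 1); (qp 0 1); (qp 0 1)]; [:: (qp 0 1); (qn 1 1); (qp 0 1); (qp 0 1)]; [:: (qn 1 1); (qp 0 1); (qp 0 1); (qp 1 1)]]].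
Definition O2_btab : seq nat := [:: 0; 1; 2; 3; 4; 5; 6; 8; 9; 12].
Definition O2_J : seq (nat * nat) := [:: (0, 0); (0, 1); (1, 0); (1, 1); (2, 0); (3, 0); (4, 0); (4, 2); (5, 0); (6, 1)].
Definition O2_L : seq (seq rat) := [:: [:: (qp 0 1); (qp 0 1); (qp 0 1); (qp 0 1); (qp 1 2); (qp 1 2); (qp 0 1); (qp 0 1); (qp 0 1); (qp 0 1)];
 [:: (qp 0 1); (qp 1 2); (qp 0 1); (qp 1 2); (qn 1 2); (qn 1 2); (qp 1 2); (qp 0 1); (qp 1 2); (qp 0 1)];
 [:: (qp 1 4); (qp 1 4); (qn 1 4); (qn 3 4); (qp 0 1); (qp 0 1); (qp 1 2); (qp 1 2); (qn 1 2); (qp 0 1)];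
 [:: (qp 0 1); (qp 1 2); (qp 0 1); (qp 0 1); (qp 1 4); (qn 1 4); (qp 0 1); (qp 0 1); (qp 0 1); (qn 1 2)];
 [:: (qp 0 1); (qp 0 1); (qp 0 1); (qp 0 1); (qn 1 2); (qn 1 2); (qp 1 2); (qp 0 1); (qp 1 2); (qp 0 1)];
 [:: (qn 1 2); (qn 1 2); (qn 1 2); (qn 1 2); (qp 1 1); (qp 1 1); (qp 0 1); (qp 0 1); (qp 0 1); (qp 0 1)];
 [:: (qn 1 4); (qn 1 4); (qp 1 4); (qp 3 4); (qp 1 2); (qn 1 2); (qp 0 1); (qn 1 2); (qp 0 1); (qp 0 1)];
 [:: (qp 1 4); (qn 1 4); (qn 1 4); (qn 1 4); (qp 0 1); (qp 0 1); (qp 1 2); (qp 1 2); (qn 1 2); (qp 0 1)];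
 [:: (qn 1 4); (qn 1 4); (qp 1 4); (qn 1 4); (qp 1 2); (qn 1 2); (qp 0 1); (qp 1 2); (qp 0 1); (qp 0 1)];
 [:: (qp 0 1); (qn 1 2); (qp 0 1); (qp 0 1); (qp 1 4); (qn 1 4); (qp 0 1); (qp 0 1); (qp 0 1); (qp 1 2)]].
Definition O2_atab : seq (seq rat) := [:: [:: (qp 1 1); (qp 0 1); (qp 0 1); (qp 0 1); (qp 0 1); (qp 0 1); (qp 0 1); (qp 0 1); (qp 0 1); (qp 0 1)];
 [:: (qp 0 1); (qp 1 1); (qp 0 1); (qp 0 1); (qp 0 1); (qp 0 1); (qp 0 1); (qp 0 1); (qp 0 1); (qp 0 1)];
 [:: (qp 0 1); (qp 0 1); (qp 1 1); (qp 0 1); (qp 0 1); (qp 0 1); (qp 0 1); (qp 0 1); (qp 0 1); (qp 0 1)];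
 [:: (qp 0 1); (qp 0 1); (qp 0 1); (qp 1 1); (qp 0 1); (qp 0 1); (qp 0 1); (qp 0 1); (qp 0 1); (qp 0 1)];
 [:: (qp 0 1); (qp 0 1); (qp 0 1); (qp 0 1); (qp 1 1); (qp 0 1); (qp 0 1); (qp 0 1); (qp 0 1); (qp 0 1)];
 [:: (qp 0 1); (qp 0 1); (qp 0 1); (qp 0 1); (qp 0 1); (qp 1 1); (qp 0 1); (qp 0 1); (qp 0 1); (qp 0 1)];
 [:: (qp 0 1); (qp 0 1); (qp 0 1); (qp 0 1); (qp 0 1); (qp 0 1); (qp 1 1); (qp 0 1); (qp 0 1); (qp 0 1)];
 [:: (qp 0 1); (qp 0 1); (qn 1 1); (qp 0 1); (qp 0 1); (qp 0 1); (qp 0 1); (qp 0 1); (qp 0 1); (qp 0 1)];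
 [:: (qp 0 1); (qp 0 1); (qp 0 1); (qp 0 1); (qp 0 1); (qp 0 1); (qp 0 1); (qp 1 1); (qp 0 1); (qp 0 1)];
 [:: (qp 0 1); (qp 0 1); (qp 0 1); (qp 0 1); (qp 0 1); (qp 0 1); (qp 0 1); (qp 0 1); (qp 1 1); (qp 0 1)];
 [:: (qp 0 1); (qp 0 1); (qp 0 1); (qp 0 1); (qp 0 1); (qp 1 1); (qp 0 1); (qp 0 1); (qp 0 1); (qp 0 1)];
 [:: (qp 0 1); (qn 1 1); (qp 0 1); (qp 0 1); (qp 0 1); (qp 0 1); (qp 0 1); (qp 0 1); (qp 0 1); (qp 0 1)];
 [:: (qp 0 1); (qp 0 1); (qp 0 1); (qp 0 1); (qp 0 1); (qp 0 1); (qp 0 1); (qp 0 1); (qp 0 1); (qp 1 1)];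
 [:: (qp 0 1); (qp 0 1); (qp 0 1); (qp 0 1); (qp 0 1); (qp 0 1); (qp 0 1); (qn 1 1); (qp 0 1); (qp 0 1)];
 [:: (qp 0 1); (qp 0 1); (qp 0 1); (qp 0 1); (qn 1 1); (qp 0 1); (qp 0 1); (qp 0 1); (qp 0 1); (qp 0 1)];
 [:: (qp 1 1); (qp 0 1); (qp 0 1); (qp 0 1); (qp 0 1); (qp 0 1); (qp 0 1); (qp 0 1); (qp 0 1); (qp 0 1)]].
Definition O2_ttab : seq (seq (rat * seq nat * nat * seq nat)) := [:: [:: ];
 [:: ];
 [:: ];
 [:: ];
 [:: ];
 [:: ];
 [:: ];
 [:: ((qp 1 1), [:: ], 1%N, [:: ])];
 [:: ];
 [:: ];
 [:: ((qp 1 1), [:: ], 4%N, [:: ]); ((qn 1 1), [:: ], 0%N, [:: ])];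
 [:: ((qp 1 1), [:: ], 5%N, [:: ])];
 [:: ];
 [:: ((qp 1 1), [:: ], 2%N, [:: ])];
 [:: ((qp 1 1), [:: ], 6%N, [:: ])];
 [:: ((qp 1 1), [:: ], 3%N, [:: ]); ((qn 1 1), [:: ], 4%N, [:: ])]].
Definition O2_relsQ := @gorth rat 2 (ords 2).
Lemma O2_Erels : orth_rels 2 = map (pmapR (@ratr algC)) O2_relsQ.
Proof. by rewrite orth_conv (@enum_ords 2) ?map_gorth //; vm_compute. Qed.
Definition O2_bidx (k : 'I_10) : quad 2 := qd 1 (nth 0 O2_btab k).
Lemma O2_c1 : map val (ords 10) = iota 0 10. Proof. by vm_compute. Qed.
Lemma O2_c2 : map val (ords 2) = iota 0 2. Proof. by vm_compute. Qed.
Lemma O2_c3 : all (fun rr => all (fun r => m2eqb (phi (mkrep O2_reps rr) r) (m2zero _)) O2_relsQ) (map fst O2_J).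
Proof. vm_compute. reflexivity. Qed.
Lemma O2_c4 : all (fun k0 => all (fun k => foldr (fun j acc => mkL O2_L k0 j * Qv O2_bidx (mkrep O2_reps) O2_J j k + acc) 0 (iota 0 (size O2_J))
                       == (k == k0)%:R) (ords 10)) (ords 10).
Proof. vm_compute. reflexivity. Qed.
Lemma O2_c5 : all (fun i => checkI O2_relsQ (gsub (gtensor rat i)
         (flatten [seq gscale (mkA O2_atab i k) (gtensor rat (O2_bidx k)) | k <- ords 10])) (mkT O2_ttab i)) (allI 2).
Proof. vm_compute. reflexivity. Qed.
Lemma O2_main : span_dim (orth_rels 2) (@tensor2_entries 2) 10.
Proof. exact: (main_span O2_Erels O2_c1 O2_c2 O2_c3 O2_c4 O2_c5). Qed.

Definition B3_reps : seq (seq (seq rat)) := [:: [:: [:: (qp 5 6); (qp 1 3); (qp 1 3); (qn 1 6)]; [:: (qp 1 3); (qn 1 6); (qn 1 6); (qp 1 3)]; [:: (qn 1 6); (qn 1 6); (qn 1 6); (qp 5 6)]; [:: (qp 1 3); (qn 1 6); (qn 1 6); (qp 1 3)]; [:: (qn 1 6); (qp 1 3); (qp 1 3); (qp 5 6)]; [:: (qp 5 6); (qn 1 6); (qn 1 6); (qn 1 6)]; [:: (qn 1 6); (qn 1 6); (qn 1 6); (qp 5 6)]; [:: (qp 5 6); (qn 1 6); (qn 1 6); (qn 1 6)]; [:: (qp 1 3); (qp 1 3); (qp 1 3); (qp 1 3)]];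
 [:: [:: (qp 5 6); (qp 1 3); (qp 1 3); (qn 1 6)]; [:: (qp 1 3); (qn 1 6); (qn 1 6); (qp 1 3)]; [:: (qn 1 6); (qn 1 6); (qn 1 6); (qp 5 6)]; [:: (qn 1 6); (qn 1 6); (qn 1 6); (qp 5 6)]; [:: (qp 5 6); (qn 1 6); (qn 1 6); (qn 1 6)]; [:: (qp 1 3); (qp 1 3); (qp 1 3); (qp 1 3)]; [:: (qp 1 3); (qn 1 6); (qn 1 6); (qp 1 3)]; [:: (qn 1 6); (qp 1 3); (qp 1 3); (qp 5 6)]; [:: (qp 5 6); (qn 1 6); (qn 1 6); (qn 1 6)]];
 [:: [:: (qp 5 6); (qp 1 3); (qp 1 3); (qn 1 6)]; [:: (qn 1 6); (qn 1 6); (qn 1 6); (qp 5 6)]; [:: (qp 1 3); (qn 1 6); (qn 1 6); (qp 1 3)]; [:: (qp 1 3); (qn 1 6); (qn 1 6); (qp 1 3)]; [:: (qp 5 6); (qn 1 6); (qn 1 6); (qn 1 6)]; [:: (qn 1 6); (qp 1 3); (qp 1 3); (qp 5 6)]; [:: (qn 1 6); (qn 1 6); (qn 1 6); (qp 5 6)]; [:: (qp 1 3); (qp 1 3); (qp 1 3); (qp 1 3)]; [:: (qp 5 6); (qn 1 6); (qn 1 6); (qn 1 6)]];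
 [:: [:: (qp 1 3); (qn 1 6); (qn 1 6); (qp 1 3)]; [:: (qn 1 6); (qp 1 3); (qp 1 3); (qp 5 6)]; [:: (qp 5 6); (qn 1 6); (qn 1 6); (qn 1 6)]; [:: (qp 5 6); (qp 1 3); (qp 1 3); (qn 1 6)]; [:: (qp 1 3); (qn 1 6); (qn 1 6); (qp 1 3)]; [:: (qn 1 6); (qn 1 6); (qn 1 6); (qp 5 6)]; [:: (qn 1 6); (qn 1 6); (qn 1 6); (qp 5 6)]; [:: (qp 5 6); (qn 1 6); (qn 1 6); (qn 1 6)]; [:: (qp 1 3); (qp 1 3); (qp 1 3); (qp 1 3)]];
 [:: [:: (qp 1 3); (qn 1 6); (qn 1 6); (qp 1 3)]; [:: (qn 1 6); (qp 1 3); (qp 1 3); (qp 5 6)]; [:: (qp 5 6); (qn 1 6); (qn 1 6); (qn 1 6)]; [:: (qn 1 6); (qn 1 6); (qn 1 6); (qp 5 6)]; [:: (qp 5 6); (qn 1 6); (qn 1 6); (qn 1 6)]; [:: (qp 1 3); (qp 1 3); (qp 1 3); (qp 1 3)]; [:: (qp 5 6); (qp 1 3); (qp 1 3); (qn 1 6)]; [:: (qp 1 3); (qn 1 6); (qn 1 6); (qp 1 3)]; [:: (qn 1 6); (qn 1 6); (qn 1 6); (qp 5 6)]];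
 [:: [:: (qn 1 6); (qn 1 6); (qn 1 6); (qp 5 6)]; [:: (qp 5 6); (qp 1 3); (qp 1 3); (qn 1 6)]; [:: (qp 1 3); (qn 1 6); (qn 1 6); (qp 1 3)]; [:: (qp 5 6); (qn 1 6); (qn 1 6); (qn 1 6)]; [:: (qp 1 3); (qn 1 6); (qn 1 6); (qp 1 3)]; [:: (qn 1 6); (qp 1 3); (qp 1 3); (qp 5 6)]; [:: (qp 1 3); (qp 1 3); (qp 1 3); (qp 1 3)]; [:: (qn 1 6); (qn 1 6); (qn 1 6); (qp 5 6)]; [:: (qp 5 6); (qn 1 6); (qn 1 6); (qn 1 6)]]].
Definition B3_btab : seq nat := [:: 0; 1; 2; 3; 4; 9; 10; 12; 13; 20; 21; 27; 28; 36].
Definition B3_J : seq (nat * nat) := [:: (0, 0); (0, 1); (0, 2); (0, 3); (1, 0); (1, 1); (1, 2); (1, 3); (2, 0); (2, 1); (3, 0); (3, 1); (4, 0); (5, 0)].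
Definition B3_L : seq (seq rat) := [:: [:: (qn 1 2); (qp 1 2); (qp 1 2); (qp 3 2); (qn 1 4); (qp 13 4); (qp 13 4); (qp 1 12); (qn 1 3); (qp 0 1); (qp 0 1); (qp 0 1); (qn 1 2); (qp 1 1)];
 [:: (qn 1 2); (qp 2 1); (qp 5 1); (qn 1 2); (qn 1 2); (qp 1 2); (qp 9 2); (qp 7 6); (qn 8 3); (qp 0 1); (qp 1 1); (qp 1 1); (qp 2 3); (qp 4 3)];
 [:: (qn 3 2); (qp 9 2); (qp 9 2); (qp 1 2); (qn 3 2); (qp 9 2); (qp 9 2); (qp 7 6); (qn 8 3); (qp 0 1); (qp 1 1); (qp 0 1); (qp 1 3); (qp 8 3)];
 [:: (qp 1 1); (qp 0 1); (qp 3 1); (qp 0 1); (qn 1 2); (qn 1 2); (qn 1 2); (qn 1 2); (qp 0 1); (qn 4 1); (qp 1 1); (qn 1 1); (qn 1 1); (qp 0 1)];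
 [:: (qp 3 16); (qp 11 16); (qp 11 16); (qn 9 16); (qp 3 16); (qn 29 16); (qn 13 16); (qp 5 48); (qp 1 3); (qn 1 1); (qn 1 8); (qp 0 1); (qp 5 24); (qn 1 3)];
 [:: (qp 2 1); (qp 1 2); (qn 5 2); (qn 2 1); (qp 1 1); (qn 2 1); (qn 6 1); (qp 0 1); (qp 0 1); (qp 0 1); (qp 0 1); (qn 1 1); (qp 1 3); (qn 4 3)];
 [:: (qp 0 1); (qn 5 1); (qn 5 1); (qp 0 1); (qp 9 4); (qn 1 4); (qn 1 4); (qn 11 4); (qp 1 1); (qp 0 1); (qp 1 1); (qp 0 1); (qn 1 6); (qn 1 3)];
 [:: (qp 19 16); (qp 59 16); (qp 59 16); (qn 25 16); (qn 21 16); (qn 21 16); (qn 37 16); (qp 31 16); (qn 1 1); (qn 1 1); (qn 1 8); (qn 2 1); (qn 1 8); (qp 1 1)];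
 [:: (qn 3 4); (qp 13 4); (qp 13 4); (qp 9 4); (qn 3 4); (qp 5 4); (qp 5 4); (qn 5 12); (qn 4 3); (qp 0 1); (qp 1 2); (qp 0 1); (qn 5 6); (qp 4 3)];
 [:: (qp 1 2); (qp 1 2); (qp 1 2); (qp 1 2); (qn 1 4); (qn 3 4); (qn 3 4); (qp 1 12); (qn 1 3); (qp 0 1); (qp 0 1); (qp 0 1); (qp 5 6); (qn 1 3)];
 [:: (qn 1 2); (qn 1 2); (qn 1 2); (qn 1 2); (qp 1 2); (qp 1 2); (qp 1 2); (qp 1 2); (qp 0 1); (qp 0 1); (qp 1 1); (qp 0 1); (qn 1 1); (qp 0 1)];
 [:: (qp 5 4); (qp 1 4); (qn 11 4); (qn 3 4); (qn 1 4); (qn 17 4); (qn 17 4); (qn 7 12); (qp 4 3); (qp 4 1); (qn 1 2); (qp 1 1); (qp 5 6); (qn 4 3)];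
 [:: (qp 1 16); (qp 41 16); (qp 41 16); (qn 3 16); (qn 23 16); (qn 7 16); (qp 9 16); (qp 79 48); (qn 1 3); (qp 1 1); (qn 11 8); (qp 2 1); (qp 31 24); (qp 1 3)];
 [:: (qp 9 16); (qn 15 16); (qn 15 16); (qn 27 16); (qp 9 16); (qn 39 16); (qn 55 16); (qp 5 16); (qp 1 1); (qp 1 1); (qn 3 8); (qp 0 1); (qp 5 8); (qn 1 1)]].
Definition B3_atab : seq (seq rat) := [:: [:: (qp 1 1); (qp 0 1); (qp 0 1); (qp 0 1); (qp 0 1); (qp 0 1); (qp 0 1); (qp 0 1); (qp 0 1); (qp 0 1); (qp 0 1); (qp 0 1); (qp 0 1); (qp 0 1)];
 [:: (qp 0 1); (qp 1 1); (qp 0 1); (qp 0 1); (qp 0 1); (qp 0 1); (qp 0 1); (qp 0 1); (qp 0 1); (qp 0 1); (qp 0 1); (qp 0 1); (qp 0 1); (qp 0 1)];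
 [:: (qp 0 1); (qp 0 1); (qp 1 1); (qp 0 1); (qp 0 1); (qp 0 1); (qp 0 1); (qp 0 1); (qp 0 1); (qp 0 1); (qp 0 1); (qp 0 1); (qp 0 1); (qp 0 1)];
 [:: (qp 0 1); (qp 0 1); (qp 0 1); (qp 1 1); (qp 0 1); (qp 0 1); (qp 0 1); (qp 0 1); (qp 0 1); (qp 0 1); (qp 0 1); (qp 0 1); (qp 0 1); (qp 0 1)];
 [:: (qp 0 1); (qp 0 1); (qp 0 1); (qp 0 1); (qp 1 1); (qp 0 1); (qp 0 1); (qp 0 1); (qp 0 1); (qp 0 1); (qp 0 1); (qp 0 1); (qp 0 1); (qp 0 1)];
 [:: (qp 1 1); (qp 1 1); (qp 1 1); (qn 1 1); (qn 1 1); (qp 0 1); (qp 0 1); (qp 0 1); (qp 0 1); (qp 0 1); (qp 0 1); (qp 0 1); (qp 0 1); (qp 0 1)];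
 [:: (qp 0 1); (qp 1 1); (qp 1 1); (qn 1 1); (qp 0 1); (qp 0 1); (qp 0 1); (qp 0 1); (qp 0 1); (qp 0 1); (qp 0 1); (qp 0 1); (qp 0 1); (qp 0 1)];
 [:: (qp 1 1); (qp 0 1); (qp 1 1); (qp 0 1); (qn 1 1); (qp 0 1); (qp 0 1); (qp 0 1); (qp 0 1); (qp 0 1); (qp 0 1); (qp 0 1); (qp 0 1); (qp 0 1)];
 [:: (qp 0 1); (qp 0 1); (qn 1 1); (qp 1 1); (qp 1 1); (qp 0 1); (qp 0 1); (qp 0 1); (qp 0 1); (qp 0 1); (qp 0 1); (qp 0 1); (qp 0 1); (qp 0 1)];
 [:: (qp 0 1); (qp 0 1); (qp 0 1); (qp 0 1); (qp 0 1); (qp 1 1); (qp 0 1); (qp 0 1); (qp 0 1); (qp 0 1); (qp 0 1); (qp 0 1); (qp 0 1); (qp 0 1)];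
 [:: (qp 0 1); (qp 0 1); (qp 0 1); (qp 0 1); (qp 0 1); (qp 0 1); (qp 1 1); (qp 0 1); (qp 0 1); (qp 0 1); (qp 0 1); (qp 0 1); (qp 0 1); (qp 0 1)];
 [:: (qp 0 1); (qn 1 2); (qn 1 1); (qp 0 1); (qp 0 1); (qn 1 2); (qp 0 1); (qp 0 1); (qp 0 1); (qp 0 1); (qp 0 1); (qp 0 1); (qp 0 1); (qp 0 1)];
 [:: (qp 0 1); (qp 0 1); (qp 0 1); (qp 0 1); (qp 0 1); (qp 0 1); (qp 0 1); (qp 1 1); (qp 0 1); (qp 0 1); (qp 0 1); (qp 0 1); (qp 0 1); (qp 0 1)];
 [:: (qp 0 1); (qp 0 1); (qp 0 1); (qp 0 1); (qp 0 1); (qp 0 1); (qp 0 1); (qp 0 1); (qp 1 1); (qp 0 1); (qp 0 1); (qp 0 1); (qp 0 1); (qp 0 1)];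
 [:: (qp 0 1); (qn 1 2); (qn 1 1); (qp 0 1); (qp 0 1); (qp 1 2); (qp 1 1); (qn 1 1); (qn 1 1); (qp 0 1); (qp 0 1); (qp 0 1); (qp 0 1); (qp 0 1)];
 [:: (qp 0 1); (qn 1 2); (qn 1 1); (qp 0 1); (qp 0 1); (qn 1 2); (qp 1 1); (qn 1 1); (qp 0 1); (qp 0 1); (qp 0 1); (qp 0 1); (qp 0 1); (qp 0 1)];
 [:: (qp 0 1); (qn 1 2); (qn 1 1); (qp 0 1); (qp 0 1); (qp 1 2); (qp 0 1); (qp 0 1); (qn 1 1); (qp 0 1); (qp 0 1); (qp 0 1); (qp 0 1); (qp 0 1)];
 [:: (qp 0 1); (qp 1 2); (qp 1 1); (qp 0 1); (qp 0 1); (qp 1 2); (qp 0 1); (qp 1 1); (qp 1 1); (qp 0 1); (qp 0 1); (qp 0 1); (qp 0 1); (qp 0 1)];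
 [:: (qp 0 1); (qp 1 1); (qp 1 1); (qp 0 1); (qp 0 1); (qn 1 1); (qp 0 1); (qp 0 1); (qp 0 1); (qp 0 1); (qp 0 1); (qp 0 1); (qp 0 1); (qp 0 1)];
 [:: (qp 0 1); (qn 3 2); (qn 1 1); (qp 0 1); (qp 0 1); (qp 1 2); (qp 0 1); (qp 0 1); (qp 0 1); (qp 0 1); (qp 0 1); (qp 0 1); (qp 0 1); (qp 0 1)];
 [:: (qp 0 1); (qp 0 1); (qp 0 1); (qp 0 1); (qp 0 1); (qp 0 1); (qp 0 1); (qp 0 1); (qp 0 1); (qp 1 1); (qp 0 1); (qp 0 1); (qp 0 1); (qp 0 1)];
 [:: (qp 0 1); (qp 0 1); (qp 0 1); (qp 0 1); (qp 0 1); (qp 0 1); (qp 0 1); (qp 0 1); (qp 0 1); (qp 0 1); (qp 1 1); (qp 0 1); (qp 0 1); (qp 0 1)];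
 [:: (qp 0 1); (qn 1 2); (qp 0 1); (qp 1 1); (qp 0 1); (qn 1 2); (qp 0 1); (qp 0 1); (qp 1 1); (qp 1 1); (qn 1 1); (qp 0 1); (qp 0 1); (qp 0 1)];
 [:: (qp 0 1); (qp 0 1); (qp 0 1); (qn 1 1); (qp 0 1); (qp 0 1); (qp 0 1); (qp 0 1); (qn 1 1); (qp 0 1); (qp 0 1); (qp 0 1); (qp 0 1); (qp 0 1)];
 [:: (qp 0 1); (qn 3 2); (qn 1 1); (qp 0 1); (qp 0 1); (qp 1 2); (qp 0 1); (qp 0 1); (qp 0 1); (qp 1 1); (qn 1 1); (qp 0 1); (qp 0 1); (qp 0 1)];
 [:: (qp 0 1); (qp 3 2); (qp 1 1); (qn 1 1); (qp 0 1); (qn 1 2); (qp 0 1); (qp 0 1); (qn 1 1); (qp 0 1); (qp 1 1); (qp 0 1); (qp 0 1); (qp 0 1)];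
 [:: (qp 0 1); (qn 1 2); (qp 0 1); (qp 1 1); (qp 0 1); (qn 1 2); (qp 0 1); (qp 0 1); (qp 1 1); (qp 0 1); (qp 0 1); (qp 0 1); (qp 0 1); (qp 0 1)];
 [:: (qp 0 1); (qp 0 1); (qp 0 1); (qp 0 1); (qp 0 1); (qp 0 1); (qp 0 1); (qp 0 1); (qp 0 1); (qp 0 1); (qp 0 1); (qp 1 1); (qp 0 1); (qp 0 1)];
 [:: (qp 0 1); (qp 0 1); (qp 0 1); (qp 0 1); (qp 0 1); (qp 0 1); (qp 0 1); (qp 0 1); (qp 0 1); (qp 0 1); (qp 0 1); (qp 0 1); (qp 1 1); (qp 0 1)];
 [:: (qp 0 1); (qp 0 1); (qp 0 1); (qp 1 1); (qp 0 1); (qp 0 1); (qp 0 1); (qp 1 1); (qp 0 1); (qp 0 1); (qp 1 1); (qn 1 1); (qn 1 1); (qp 0 1)];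
 [:: (qp 0 1); (qp 1 1); (qp 1 1); (qp 1 2); (qp 0 1); (qp 0 1); (qp 0 1); (qp 1 1); (qp 0 1); (qp 0 1); (qp 1 1); (qn 1 2); (qp 0 1); (qp 0 1)];
 [:: (qp 0 1); (qn 1 1); (qp 0 1); (qp 1 1); (qp 0 1); (qp 0 1); (qp 0 1); (qp 1 2); (qp 1 1); (qp 0 1); (qp 0 1); (qp 0 1); (qn 1 2); (qp 0 1)];
 [:: (qp 0 1); (qp 0 1); (qn 1 1); (qn 1 2); (qp 0 1); (qp 0 1); (qp 0 1); (qn 1 2); (qn 1 1); (qp 0 1); (qp 0 1); (qp 1 2); (qp 1 2); (qp 0 1)];
 [:: (qp 0 1); (qn 1 1); (qn 1 1); (qp 1 2); (qp 0 1); (qp 0 1); (qp 0 1); (qp 0 1); (qp 0 1); (qp 0 1); (qp 0 1); (qn 1 2); (qp 0 1); (qp 0 1)];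
 [:: (qp 0 1); (qp 1 1); (qp 0 1); (qp 0 1); (qp 0 1); (qp 0 1); (qp 0 1); (qp 1 2); (qn 1 1); (qp 0 1); (qp 1 1); (qp 0 1); (qn 1 2); (qp 0 1)];
 [:: (qp 0 1); (qp 0 1); (qp 1 1); (qp 1 2); (qp 0 1); (qp 0 1); (qp 0 1); (qp 1 2); (qp 1 1); (qp 0 1); (qp 0 1); (qp 1 2); (qp 1 2); (qp 0 1)];
 [:: (qp 0 1); (qp 0 1); (qp 0 1); (qp 0 1); (qp 0 1); (qp 0 1); (qp 0 1); (qp 0 1); (qp 0 1); (qp 0 1); (qp 0 1); (qp 0 1); (qp 0 1); (qp 1 1)];
 [:: (qp 0 1); (qp 0 1); (qp 0 1); (qp 1 1); (qp 1 2); (qp 0 1); (qp 0 1); (qp 1 2); (qp 1 1); (qp 0 1); (qp 0 1); (qn 1 1); (qn 1 2); (qn 1 2)];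
 [:: (qp 0 1); (qn 1 2); (qp 0 1); (qp 0 1); (qp 1 2); (qn 1 2); (qp 0 1); (qn 1 2); (qp 1 1); (qp 1 1); (qn 1 1); (qp 1 1); (qp 1 2); (qn 1 2)];
 [:: (qp 0 1); (qp 0 1); (qp 0 1); (qp 1 1); (qp 1 2); (qn 1 1); (qp 0 1); (qp 0 1); (qp 1 1); (qp 0 1); (qp 0 1); (qp 0 1); (qp 0 1); (qn 1 2)];
 [:: (qp 0 1); (qn 1 1); (qn 1 1); (qp 1 2); (qp 3 4); (qp 0 1); (qp 0 1); (qn 1 4); (qp 1 1); (qp 1 1); (qn 1 1); (qp 1 2); (qp 1 4); (qp 1 4)];
 [:: (qp 0 1); (qp 1 2); (qp 1 1); (qn 1 2); (qn 1 4); (qp 1 2); (qp 0 1); (qp 1 4); (qp 0 1); (qp 0 1); (qp 0 1); (qn 1 2); (qn 1 4); (qp 1 4)];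
 [:: (qp 0 1); (qn 1 2); (qp 0 1); (qp 0 1); (qp 1 2); (qp 1 2); (qp 0 1); (qp 0 1); (qp 1 1); (qp 1 1); (qn 1 1); (qp 0 1); (qp 0 1); (qn 1 2)];
 [:: (qp 0 1); (qp 1 2); (qp 1 1); (qn 1 2); (qn 1 4); (qn 1 2); (qp 0 1); (qn 1 4); (qp 0 1); (qp 0 1); (qp 0 1); (qp 1 2); (qp 1 4); (qp 1 4)];
 [:: (qp 0 1); (qn 1 2); (qn 1 1); (qp 3 2); (qp 3 4); (qn 1 2); (qp 0 1); (qp 1 4); (qp 1 1); (qp 0 1); (qp 0 1); (qn 1 2); (qn 1 4); (qp 1 4)];
 [:: (qp 1 1); (qp 1 1); (qp 1 1); (qp 0 1); (qp 0 1); (qp 0 1); (qp 0 1); (qp 0 1); (qp 0 1); (qp 0 1); (qp 0 1); (qn 1 1); (qp 0 1); (qn 1 1)];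
 [:: (qp 0 1); (qn 1 2); (qn 1 1); (qn 1 1); (qn 1 2); (qp 1 2); (qp 1 1); (qn 1 2); (qn 1 1); (qp 0 1); (qp 0 1); (qp 1 1); (qn 1 2); (qp 1 2)];
 [:: (qp 0 1); (qp 0 1); (qp 0 1); (qn 1 1); (qn 1 2); (qp 0 1); (qp 0 1); (qn 1 2); (qn 1 1); (qp 0 1); (qp 0 1); (qp 0 1); (qp 1 2); (qp 1 2)];
 [:: (qp 0 1); (qn 1 1); (qn 1 1); (qn 1 2); (qn 1 2); (qp 1 1); (qp 0 1); (qp 0 1); (qn 1 1); (qp 0 1); (qp 0 1); (qp 1 2); (qp 0 1); (qp 1 2)];
 [:: (qp 0 1); (qp 3 2); (qp 1 1); (qn 1 2); (qp 1 4); (qn 1 2); (qp 0 1); (qn 1 4); (qp 0 1); (qp 0 1); (qp 0 1); (qn 1 2); (qp 1 4); (qn 1 4)];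
 [:: (qp 1 1); (qp 0 1); (qp 0 1); (qn 1 1); (qn 3 4); (qp 0 1); (qp 1 1); (qn 3 4); (qn 1 1); (qp 0 1); (qp 0 1); (qp 0 1); (qn 1 4); (qn 1 4)];
 [:: (qp 0 1); (qp 1 2); (qp 0 1); (qn 3 2); (qn 1 2); (qn 1 2); (qp 1 1); (qn 1 1); (qn 1 1); (qp 0 1); (qp 0 1); (qp 1 2); (qp 0 1); (qp 1 2)];
 [:: (qp 1 1); (qn 1 2); (qp 0 1); (qn 1 2); (qn 3 4); (qp 1 2); (qp 0 1); (qn 1 4); (qn 1 1); (qp 0 1); (qp 0 1); (qn 1 2); (qp 1 4); (qn 1 4)];
 [:: (qp 0 1); (qp 1 2); (qp 0 1); (qp 0 1); (qp 1 4); (qp 1 2); (qp 0 1); (qp 1 4); (qp 0 1); (qp 0 1); (qp 0 1); (qp 0 1); (qn 1 4); (qn 1 4)];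
 [:: (qp 0 1); (qp 1 1); (qp 1 1); (qp 0 1); (qp 0 1); (qp 0 1); (qp 0 1); (qp 0 1); (qp 0 1); (qp 0 1); (qp 0 1); (qn 1 1); (qp 0 1); (qp 0 1)];
 [:: (qp 0 1); (qn 3 2); (qn 1 1); (qp 0 1); (qp 0 1); (qp 1 2); (qp 1 1); (qp 0 1); (qp 0 1); (qp 0 1); (qp 0 1); (qp 0 1); (qn 1 1); (qp 0 1)];
 [:: (qp 0 1); (qn 1 2); (qn 1 1); (qn 1 1); (qp 0 1); (qn 1 2); (qp 0 1); (qn 1 1); (qp 0 1); (qp 1 1); (qn 1 1); (qp 1 1); (qp 1 1); (qp 0 1)];
 [:: (qp 0 1); (qn 1 1); (qn 1 1); (qn 1 2); (qp 0 1); (qp 0 1); (qp 0 1); (qp 0 1); (qp 0 1); (qp 0 1); (qp 0 1); (qp 1 2); (qp 0 1); (qp 0 1)];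
 [:: (qp 0 1); (qp 1 2); (qp 0 1); (qp 0 1); (qp 0 1); (qn 1 2); (qp 0 1); (qn 1 2); (qp 1 1); (qp 1 1); (qn 1 1); (qp 0 1); (qp 1 2); (qp 0 1)];
 [:: (qp 0 1); (qn 1 2); (qp 0 1); (qn 1 2); (qp 0 1); (qp 1 2); (qp 1 1); (qn 1 2); (qn 1 1); (qp 0 1); (qp 0 1); (qn 1 2); (qn 1 2); (qp 0 1)];
 [:: (qp 0 1); (qn 1 1); (qn 1 1); (qn 1 2); (qp 0 1); (qp 0 1); (qp 1 1); (qn 1 1); (qp 0 1); (qp 1 1); (qn 1 1); (qp 1 2); (qp 0 1); (qp 0 1)];
 [:: (qp 0 1); (qp 0 1); (qp 0 1); (qn 1 1); (qp 0 1); (qp 0 1); (qp 0 1); (qn 1 2); (qn 1 1); (qp 0 1); (qp 0 1); (qp 0 1); (qp 1 2); (qp 0 1)];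
 [:: (qp 0 1); (qp 0 1); (qp 0 1); (qp 1 2); (qp 0 1); (qp 0 1); (qp 0 1); (qp 1 2); (qp 1 1); (qp 0 1); (qp 0 1); (qn 1 2); (qn 1 2); (qp 0 1)];
 [:: (qp 1 1); (qp 1 1); (qp 1 1); (qp 0 1); (qp 0 1); (qn 1 1); (qp 0 1); (qp 0 1); (qp 0 1); (qp 0 1); (qp 0 1); (qp 0 1); (qp 0 1); (qn 1 1)];
 [:: (qp 0 1); (qn 1 2); (qn 1 1); (qn 1 1); (qn 1 2); (qp 1 2); (qp 0 1); (qn 1 2); (qn 1 1); (qp 0 1); (qp 0 1); (qp 1 1); (qp 1 2); (qp 1 2)];
 [:: (qp 0 1); (qp 1 2); (qp 1 1); (qp 0 1); (qn 1 2); (qp 1 2); (qp 0 1); (qp 1 2); (qn 1 1); (qp 0 1); (qp 1 1); (qn 1 1); (qn 1 2); (qp 1 2)];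
 [:: (qp 0 1); (qp 0 1); (qp 0 1); (qp 0 1); (qn 1 2); (qp 1 1); (qp 0 1); (qp 0 1); (qn 1 1); (qp 0 1); (qp 1 1); (qp 0 1); (qp 0 1); (qp 1 2)];
 [:: (qp 0 1); (qp 1 2); (qp 1 1); (qp 1 2); (qp 1 4); (qn 1 2); (qp 0 1); (qp 1 4); (qp 0 1); (qp 0 1); (qp 0 1); (qn 1 2); (qn 1 4); (qn 1 4)];
 [:: (qp 1 1); (qp 1 2); (qp 0 1); (qn 3 2); (qn 3 4); (qn 1 2); (qp 0 1); (qn 1 4); (qn 1 1); (qp 0 1); (qp 0 1); (qp 1 2); (qp 1 4); (qn 1 4)];
 [:: (qp 0 1); (qp 0 1); (qp 0 1); (qn 1 1); (qn 1 2); (qp 0 1); (qp 0 1); (qp 0 1); (qn 1 1); (qp 0 1); (qp 0 1); (qp 0 1); (qp 0 1); (qp 1 2)];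
 [:: (qp 1 1); (qp 1 1); (qp 1 1); (qn 1 2); (qn 3 4); (qp 0 1); (qp 0 1); (qp 1 4); (qn 1 1); (qp 0 1); (qp 1 1); (qn 1 2); (qn 1 4); (qn 1 4)];
 [:: (qp 0 1); (qp 0 1); (qp 0 1); (qp 1 2); (qp 1 4); (qp 0 1); (qp 0 1); (qn 1 4); (qp 0 1); (qp 0 1); (qp 0 1); (qp 1 2); (qp 1 4); (qn 1 4)];
 [:: (qp 0 1); (qn 1 1); (qn 1 1); (qp 0 1); (qp 0 1); (qp 1 1); (qp 0 1); (qp 0 1); (qp 0 1); (qp 0 1); (qp 0 1); (qp 1 1); (qp 0 1); (qp 1 1)];
 [:: (qp 0 1); (qp 3 2); (qp 1 1); (qp 1 1); (qp 1 2); (qn 1 2); (qp 0 1); (qp 1 2); (qp 1 1); (qp 0 1); (qp 0 1); (qn 1 1); (qp 1 2); (qn 1 2)];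
 [:: (qp 0 1); (qn 1 2); (qp 0 1); (qp 1 1); (qp 1 2); (qn 1 2); (qp 0 1); (qp 1 2); (qp 1 1); (qp 0 1); (qp 0 1); (qp 0 1); (qn 1 2); (qn 1 2)];
 [:: (qp 0 1); (qp 1 1); (qp 1 1); (qp 3 2); (qp 1 2); (qn 1 1); (qp 0 1); (qp 1 1); (qp 1 1); (qp 0 1); (qp 0 1); (qn 1 2); (qp 0 1); (qn 1 2)];
 [:: (qp 0 1); (qn 3 2); (qn 1 1); (qp 1 2); (qp 3 4); (qp 1 2); (qp 0 1); (qp 1 4); (qp 1 1); (qp 0 1); (qp 0 1); (qp 1 2); (qn 1 4); (qp 1 4)];
 [:: (qp 0 1); (qp 1 2); (qp 0 1); (qp 0 1); (qn 1 4); (qp 1 2); (qp 0 1); (qn 1 4); (qp 0 1); (qp 0 1); (qp 0 1); (qp 0 1); (qp 1 4); (qp 1 4)];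
 [:: (qp 0 1); (qp 0 1); (qp 0 1); (qp 1 2); (qp 1 2); (qp 0 1); (qp 0 1); (qp 0 1); (qp 1 1); (qp 0 1); (qp 0 1); (qn 1 2); (qp 0 1); (qn 1 2)];
 [:: (qp 0 1); (qp 0 1); (qp 0 1); (qp 1 2); (qn 1 4); (qp 0 1); (qp 0 1); (qp 1 4); (qp 0 1); (qp 0 1); (qp 0 1); (qp 1 2); (qn 1 4); (qp 1 4)];
 [:: (qp 0 1); (qp 0 1); (qp 0 1); (qp 1 1); (qp 3 4); (qp 0 1); (qp 0 1); (qp 3 4); (qp 1 1); (qp 0 1); (qp 0 1); (qp 0 1); (qp 1 4); (qp 1 4)]].
Definition B3_ttab : seq (seq (rat * seq nat * nat * seq nat)) := [:: [:: ];
 [:: ];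
 [:: ];
 [:: ];
 [:: ];
 [:: ((qn 1 1), [:: 0], 18%N, [:: ]); ((qp 1 1), [:: 0], 19%N, [:: ])];
 [:: ((qn 1 1), [:: 0], 18%N, [:: ]); ((qp 1 1), [:: 0], 21%N, [:: ])];
 [:: ((qn 1 1), [:: 0], 18%N, [:: ]); ((qp 1 1), [:: 0], 22%N, [:: ])];
 [:: ((qp 1 1), [:: 0], 18%N, [:: ]); ((qn 1 1), [:: 0], 21%N, [:: ]); ((qp 1 1), [:: 0], 20%N, [:: ]); ((qn 1 1), [:: 0], 22%N, [:: ])];
 [:: ];
 [:: ];
 [:: ((qn 1 2), [:: ], 0%N, [:: ]); ((qp 1 2), [:: ], 18%N, [:: ]); ((qp 1 1), [:: 0], 18%N, [:: ]); ((qn 1 2), [:: ], 18%N, [:: 0]); ((qp 1 2), [:: 2], 18%N, [:: ]); ((qp 1 1), [:: 1], 18%N, [:: ]); ((qn 1 2), [:: ], 18%N, [:: 1])];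
 [:: ];
 [:: ];
 [:: ((qn 1 2), [:: ], 0%N, [:: ]); ((qp 1 2), [:: ], 18%N, [:: ]); ((qp 1 1), [:: 0], 18%N, [:: ]); ((qn 1 2), [:: ], 18%N, [:: 0]); ((qp 1 2), [:: 2], 18%N, [:: ]); ((qp 1 1), [:: 1], 19%N, [:: ]); ((qn 1 2), [:: ], 18%N, [:: 1])];
 [:: ((qn 1 2), [:: ], 0%N, [:: ]); ((qp 1 2), [:: ], 18%N, [:: ]); ((qp 1 1), [:: 0], 18%N, [:: ]); ((qn 1 2), [:: ], 18%N, [:: 0]); ((qp 1 2), [:: 2], 18%N, [:: ]); ((qn 1 2), [:: ], 18%N, [:: 1]); ((qp 1 1), [:: 1], 21%N, [:: ])];
 [:: ((qp 1 2), [:: 0], 20%N, [:: ]); ((qp 1 2), [:: ], 2%N, [:: ]); ((qp 1 2), [:: 0], 18%N, [:: ]); ((qp 1 2), [:: ], 9%N, [:: ]); ((qp 1 2), [:: ], 10%N, [:: ]); ((qp 1 2), [:: ], 11%N, [:: ]); ((qp 1 2), [:: ], 12%N, [:: ]); ((qp 1 2), [:: ], 13%N, [:: ]); ((qn 1 2), [:: 1], 18%N, [:: ]); ((qp 1 2), [:: ], 14%N, [:: ]); ((qn 1 2), [:: ], 18%N, [:: 8]); ((qn 1 2), [:: ], 19%N, [:: ]); ((qn 1 2), [:: 3], 19%N, [:: ]); ((qn 1 2), [:: 4], 19%N, [:: ]); ((qn 1 2), [:: 6], 20%N, [:: ]); ((qn 1 2), [:: ], 20%N, [:: ]); ((qp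 1 2), [:: ], 1%N, [:: ]); ((qp 1 2), [:: 0], 19%N, [:: ]); ((qn 1 2), [:: ], 18%N, [:: 5]); ((qn 1 1), [:: 0], 21%N, [:: ]); ((qp 1 2), [:: 1], 19%N, [:: ]); ((qn 1 2), [:: 7], 20%N, [:: ]); ((qn 1 2), [:: 1], 21%N, [:: ]); ((qp 1 2), [:: 1], 20%N, [:: ]); ((qn 1 2), [:: 0], 22%N, [:: ])];
 [:: ((qn 1 2), [:: ], 1%N, [:: ]); ((qp 1 2), [:: ], 19%N, [:: ]); ((qn 1 2), [:: 0], 19%N, [:: ]); ((qn 1 2), [:: 0], 18%N, [:: ]); ((qn 1 2), [:: ], 9%N, [:: ]); ((qn 1 2), [:: ], 10%N, [:: ]); ((qn 1 2), [:: ], 11%N, [:: ]); ((qn 1 2), [:: ], 12%N, [:: ]); ((qn 1 2), [:: ], 13%N, [:: ]); ((qp 1 2), [:: 1], 18%N, [:: ]); ((qn 1 2), [:: ], 14%N, [:: ]); ((qp 1 2), [:: ], 18%N, [:: 5]); ((qp 1 2), [:: 3], 19%N, [:: ]); ((qp 1 2), [:: 4], 19%N, [:: ]); ((qp 1 1), [:: 0], 21%N, [:: ]); ((qn 1 2), [:: ], 2%N, [:: ]); ((qn 1 2), [:: 0], 20%N, [:: ]); ((qp 1 2), [:: ], 18%N, [:: 8]); ((qp 1 2), [:: 6], 20%N, [:: ]); ((qp 1 2), [:: ], 20%N, [:: ]); ((qp 1 2), [:: 7], 20%N, [:: ]); ((qn 1 2), [:: 1], 19%N, [:: ]); ((qn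 1 2), [:: 1], 21%N, [:: ]); ((qp 1 2), [:: 1], 20%N, [:: ]); ((qp 1 2), [:: 0], 22%N, [:: ])];
 [:: ((qn 1 1), [:: 0], 18%N, [:: ]); ((qp 1 1), [:: ], 18%N, [:: 0])];
 [:: ((qp 1 2), [:: ], 18%N, [:: ]); ((qn 1 2), [:: ], 0%N, [:: ]); ((qp 1 1), [:: 0], 18%N, [:: ]); ((qp 1 2), [:: ], 18%N, [:: 1]); ((qn 1 2), [:: ], 18%N, [:: 0]); ((qp 1 2), [:: 2], 18%N, [:: ])];
 [:: ];
 [:: ];
 [:: ((qn 1 2), [:: ], 0%N, [:: ]); ((qn 1 2), [:: ], 18%N, [:: ]); ((qp 1 2), [:: ], 18%N, [:: 0]); ((qp 1 1), [:: ], 18%N, [:: 3]); ((qn 1 1), [:: ], 1%N, [:: ]); ((qp 1 1), [:: ], 19%N, [:: ]); ((qn 1 1), [:: 0], 19%N, [:: ]); ((qn 1 2), [:: 2], 18%N, [:: ]); ((qp 1 1), [:: ], 18%N, [:: 4]); ((qp 1 1), [:: ], 18%N, [:: 5]); ((qn 1 1), [:: 1], 19%N, [:: ]); ((qp 1 2), [:: ], 18%N, [:: 1])];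
 [:: ((qp 1 1), [:: ], 1%N, [:: ])];
 [:: ((qn 1 2), [:: ], 0%N, [:: ]); ((qp 1 1), [:: ], 9%N, [:: ]); ((qp 1 1), [:: ], 10%N, [:: ]); ((qp 1 1), [:: ], 11%N, [:: ]); ((qn 1 2), [:: ], 18%N, [:: ]); ((qp 1 2), [:: ], 18%N, [:: 0]); ((qn 1 2), [:: 2], 18%N, [:: ]); ((qp 1 1), [:: ], 18%N, [:: 6]); ((qn 1 1), [:: 3], 19%N, [:: ]); ((qp 1 2), [:: ], 18%N, [:: 1]); ((qn 1 1), [:: 6], 20%N, [:: ]); ((qn 1 1), [:: 0], 21%N, [:: ]); ((qp 1 1), [:: ], 18%N, [:: 3]); ((qn 1 1), [:: 1], 21%N, [:: ])];
 [:: ((qp 1 1), [:: ], 18%N, [:: 7]); ((qp 1 2), [:: ], 13%N, [:: ]); ((qn 1 2), [:: ], 9%N, [:: ]); ((qn 1 2), [:: 1], 18%N, [:: ]); ((qp 1 2), [:: ], 12%N, [:: ]); ((qp 1 2), [:: ], 14%N, [:: ]); ((qn 1 2), [:: 0], 18%N, [:: ]); ((qn 1 2), [:: ], 10%N, [:: ]); ((qn 1 2), [:: ], 11%N, [:: ]); ((qn 1 2), [:: ], 19%N, [:: ]); ((qp 1 2), [:: 3], 19%N, [:: ]); ((qn 1 2), [:: 4], 19%N, [:: ]); ((qn 1 2), [:: 0], 20%N, [:: ]); ((qn 1 2), [:: ], 2%N, [:: ]); ((qp 1 2), [:: ], 18%N, [:: 8]); ((qn 1 2), [:: 7], 20%N,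 [:: ]); ((qp 1 2), [:: 6], 20%N, [:: ]); ((qp 1 2), [:: ], 20%N, [:: ]); ((qp 1 2), [:: ], 1%N, [:: ]); ((qp 1 2), [:: 0], 19%N, [:: ]); ((qn 1 2), [:: ], 18%N, [:: 5]); ((qp 1 1), [:: 0], 21%N, [:: ]); ((qn 1 1), [:: ], 18%N, [:: 3]); ((qp 1 2), [:: 1], 19%N, [:: ]); ((qp 1 2), [:: 1], 21%N, [:: ]); ((qn 1 2), [:: 1], 20%N, [:: ]); ((qn 1 2), [:: 0], 22%N, [:: ])];
 [:: ((qn 1 2), [:: ], 13%N, [:: ]); ((qn 1 2), [:: ], 9%N, [:: ]); ((qp 1 2), [:: 1], 18%N, [:: ]); ((qn 1 2), [:: ], 12%N, [:: ]); ((qn 1 2), [:: ], 14%N, [:: ]); ((qp 1 2), [:: 0], 18%N, [:: ]); ((qn 1 2), [:: ], 10%N, [:: ]); ((qn 1 2), [:: ], 11%N, [:: ]); ((qn 1 2), [:: ], 1%N, [:: ]); ((qn 1 2), [:: 0], 19%N, [:: ]); ((qp 1 2), [:: ], 18%N, [:: 5]); ((qn 1 2), [:: 1], 19%N, [:: ]); ((qp 1 2), [:: ], 19%N, [:: ]); ((qp 1 2), [:: 3], 19%N, [:: ]); ((qp 1 2), [:: 4], 19%N, [:: ]); ((qp 1 2), [:: 6], 20%N, [:: ]); ((qp 1 2), [:: ], 20%N, [:: ]); ((qp 1 2), [:: 7], 20%N, [:: ]); ((qp 1 2), [:: ], 2%N, [:: ]); ((qn 1 2), [:: 0], 20%N,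 [:: ]); ((qp 1 2), [:: ], 18%N, [:: 8]); ((qp 1 2), [:: 1], 21%N, [:: ]); ((qn 1 2), [:: 1], 20%N, [:: ]); ((qp 1 2), [:: 0], 22%N, [:: ])];
 [:: ];
 [:: ];
 [:: ((qp 1 1), [:: 3], 18%N, [:: ]); ((qn 1 1), [:: ], 18%N, [:: 3])];
 [:: ((qn 1 2), [:: 0], 18%N, [:: ]); ((qn 1 2), [:: ], 10%N, [:: ]); ((qn 1 2), [:: ], 11%N, [:: ]); ((qp 1 2), [:: 3], 19%N, [:: ]); ((qp 1 2), [:: 6], 20%N, [:: ]); ((qp 1 2), [:: ], 21%N, [:: 0]); ((qn 1 2), [:: 6], 21%N, [:: ]); ((qn 1 1), [:: ], 18%N, [:: 3]); ((qp 1 2), [:: ], 21%N, [:: 3])];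
 [:: ((qn 1 2), [:: ], 12%N, [:: ]); ((qp 1 2), [:: ], 10%N, [:: ]); ((qn 1 2), [:: ], 13%N, [:: ]); ((qp 1 2), [:: 1], 18%N, [:: ]); ((qn 1 2), [:: ], 14%N, [:: ]); ((qp 1 2), [:: ], 19%N, [:: ]); ((qp 1 2), [:: 4], 19%N, [:: ]); ((qp 1 2), [:: 0], 22%N, [:: ]); ((qn 1 2), [:: 0], 19%N, [:: ]); ((qn 1 2), [:: ], 1%N, [:: ]); ((qp 1 2), [:: ], 18%N, [:: 5]); ((qp 1 2), [:: 7], 20%N, [:: ]); ((qn 1 2), [:: 1], 19%N, [:: ]); ((qn 1 2), [:: ], 21%N, [:: 7]); ((qp 1 2), [:: 3], 22%N, [:: ])];
 [:: ((qp 1 2), [:: ], 13%N, [:: ]); ((qp 1 2), [:: 0], 18%N, [:: ]); ((qp 1 2), [:: ], 11%N, [:: ]); ((qp 1 2), [:: ], 12%N, [:: ]); ((qn 1 2), [:: 1], 18%N, [:: ]); ((qp 1 2), [:: ], 14%N, [:: ]); ((qp 1 2), [:: 3], 19%N, [:: ]); ((qn 1 2), [:: ], 19%N, [:: ]); ((qn 1 2), [:: 4], 19%N, [:: ]); ((qn 1 2), [:: ], 21%N, [:: 0]); ((qn 1 2), [:: 6], 20%N, [:: ]); ((qp 1 2), [:: 6], 21%N, [:: ]); ((qn 1 2), [:: 0], 22%N, [:: ]); ((qp 1 2), [:: 0], 19%N, [:: ]); ((qp 1 2), [:: ], 1%N, [:: ]); ((qn 1 2), [:: ], 18%N, [:: 5]);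 ((qn 1 2), [:: 7], 20%N, [:: ]); ((qp 1 2), [:: 1], 19%N, [:: ]); ((qn 1 2), [:: ], 21%N, [:: 3]); ((qp 1 2), [:: ], 21%N, [:: 7]); ((qn 1 2), [:: 3], 22%N, [:: ])];
 [:: ((qp 1 2), [:: 0], 18%N, [:: ]); ((qp 1 2), [:: ], 10%N, [:: ]); ((qp 1 2), [:: ], 11%N, [:: ]); ((qn 1 2), [:: 3], 19%N, [:: ]); ((qn 1 2), [:: 6], 20%N, [:: ]); ((qp 1 1), [:: 3], 21%N, [:: ]); ((qn 1 2), [:: ], 21%N, [:: 0]); ((qp 1 2), [:: 6], 21%N, [:: ]); ((qn 1 2), [:: ], 21%N, [:: 3])];
 [:: ((qn 1 2), [:: ], 19%N, [:: ]); ((qn 1 2), [:: ], 10%N, [:: ]); ((qp 1 2), [:: ], 12%N, [:: ]); ((qp 1 2), [:: ], 13%N, [:: ]); ((qn 1 2), [:: 1], 18%N, [:: ]); ((qp 1 2), [:: ], 14%N, [:: ]); ((qn 1 2), [:: 4], 19%N, [:: ]); ((qn 1 2), [:: 7], 20%N, [:: ]); ((qn 1 2), [:: 0], 22%N, [:: ]); ((qp 1 2), [:: 0], 19%N, [:: ]); ((qp 1 2), [:: ], 1%N, [:: ]); ((qn 1 2), [:: ], 18%N, [:: 5]); ((qn 1 1), [:: ], 18%N, [:: 3]); ((qp 1 2), [:: 1], 19%N, [:: ]); ((qp 1 2), [:: ], 21%N, [:: 7]); ((qp 1 2), [:: 3], 22%N, [:: ])];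
 [:: ((qp 1 2), [:: 7], 20%N, [:: ]); ((qp 1 2), [:: 4], 19%N, [:: ]); ((qn 1 2), [:: ], 13%N, [:: ]); ((qp 1 2), [:: 1], 18%N, [:: ]); ((qn 1 2), [:: ], 12%N, [:: ]); ((qn 1 2), [:: ], 14%N, [:: ]); ((qn 1 2), [:: 0], 18%N, [:: ]); ((qn 1 2), [:: ], 11%N, [:: ]); ((qp 1 2), [:: 3], 19%N, [:: ]); ((qp 1 2), [:: ], 19%N, [:: ]); ((qp 1 2), [:: 6], 20%N, [:: ]); ((qn 1 1), [:: 3], 21%N, [:: ]); ((qp 1 1), [:: 3], 20%N, [:: ]); ((qp 1 2), [:: ], 21%N, [:: 0]); ((qn 1 2), [:: 6], 21%N, [:: ]); ((qp 1 2), [:: 0], 22%N, [:: ]); ((qn 1 2), [:: 0], 19%N, [:: ]); ((qn 1 2), [:: ], 1%N, [:: ]); ((qp 1 2), [:: ], 18%N, [:: 5]); ((qn 1 2), [:: 1], 19%N, [:: ]); ((qp 1 2), [:: ], 21%N, [:: 3]); ((qn 1 2), [:: ], 21%N, [:: 7]); ((qn 1 2), [:: 3], 22%N, [:: ])];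
 [:: ];
 [:: ((qp 1 2), [:: ], 3%N, [:: ]); ((qn 1 2), [:: 5], 18%N, [:: ]); ((qp 1 2), [:: ], 19%N, [:: 0]); ((qp 1 2), [:: ], 19%N, [:: 1]); ((qn 1 2), [:: 0], 19%N, [:: ]); ((qn 1 2), [:: ], 1%N, [:: ]); ((qp 1 2), [:: ], 18%N, [:: 5]); ((qn 1 2), [:: 1], 19%N, [:: ])];
 [:: ((qn 1 2), [:: ], 3%N, [:: ]); ((qn 1 2), [:: ], 0%N, [:: ]); ((qn 1 2), [:: ], 18%N, [:: ]); ((qp 1 2), [:: ], 18%N, [:: 0]); ((qn 1 2), [:: 2], 18%N, [:: ]); ((qp 1 1), [:: ], 19%N, [:: ]); ((qp 1 1), [:: 4], 18%N, [:: ]); ((qp 1 2), [:: 5], 18%N, [:: ]); ((qn 1 2), [:: ], 19%N, [:: 0]); ((qp 1 2), [:: ], 18%N, [:: 1]); ((qn 1 2), [:: ], 19%N, [:: 1]); ((qn 1 2), [:: 0], 19%N, [:: ]); ((qn 1 2), [:: ], 1%N, [:: ]); ((qp 1 2), [:: ], 18%N, [:: 5]); ((qp 1 1), [:: ], 18%N, [:: 3]); ((qn 1 2), [:: 1], 19%N, [:: ])];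
 [:: ((qn 1 2), [:: ], 13%N, [:: ]); ((qp 1 2), [:: 1], 18%N, [:: ]); ((qn 1 2), [:: ], 14%N, [:: ]); ((qp 1 2), [:: 4], 19%N, [:: ]); ((qp 1 2), [:: ], 19%N, [:: ]); ((qn 1 2), [:: 0], 19%N, [:: ]); ((qn 1 2), [:: ], 1%N, [:: ]); ((qp 1 2), [:: ], 18%N, [:: 5]); ((qp 1 2), [:: 7], 20%N, [:: ]); ((qn 1 2), [:: 1], 19%N, [:: ]); ((qp 1 2), [:: ], 22%N, [:: 0]); ((qn 1 2), [:: 7], 21%N, [:: ]); ((qp 1 2), [:: ], 22%N, [:: 3])];
 [:: ((qn 1 2), [:: ], 18%N, [:: ]); ((qn 1 2), [:: ], 0%N, [:: ]); ((qp 1 2), [:: ], 4%N, [:: ]); ((qp 1 2), [:: 0], 18%N, [:: ]); ((qp 1 4), [:: ], 10%N, [:: ]); ((qp 1 2), [:: ], 11%N, [:: ]); ((qp 1 2), [:: ], 18%N, [:: 0]); ((qp 1 4), [:: ], 12%N, [:: ]); ((qn 1 2), [:: 2], 18%N, [:: ]); ((qp 1 2), [:: ], 13%N, [:: ]); ((qn 1 2), [:: 1], 18%N, [:: ]); ((qp 1 2), [:: ], 14%N, [:: ]); ((qn 1 2), [:: 3], 19%N, [:: ]); ((qp 1 2), [:: ], 19%N, [:: 3]); ((qn 1 2), [:: 5], 19%N, [:: ]); ((qn 1 2), [:: 4], 19%N, [:: ]); ((qn 1 2), [:: 6], 20%N, [:: ]); ((qn 1 2), [:: ], 21%N, [:: 0]);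 ((qp 1 2), [:: 6], 21%N, [:: ]); ((qn 1 4), [:: ], 22%N, [:: 0]); ((qn 1 2), [:: 7], 20%N, [:: ]); ((qp 1 2), [:: ], 18%N, [:: 1]); ((qp 1 4), [:: 7], 21%N, [:: ]); ((qn 1 4), [:: 0], 22%N, [:: ]); ((qn 1 2), [:: 0], 19%N, [:: ]); ((qn 1 2), [:: ], 1%N, [:: ]); ((qp 1 2), [:: ], 18%N, [:: 5]); ((qp 1 1), [:: ], 18%N, [:: 3]); ((qn 1 2), [:: 1], 19%N, [:: ]); ((qp 1 2), [:: ], 19%N, [:: 4]); ((qn 1 2), [:: ], 21%N, [:: 3]); ((qp 1 4), [:: ], 21%N, [:: 7]); ((qn 1 4), [:: ], 22%N, [:: 3]); ((qn 1 4), [:: 3], 22%N, [:: ])];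
 [:: ((qn 1 2), [:: ], 4%N, [:: ]); ((qp 1 2), [:: ], 19%N, [:: ]); ((qn 1 2), [:: 0], 18%N, [:: ]); ((qn 1 4), [:: ], 10%N, [:: ]); ((qn 1 2), [:: ], 11%N, [:: ]); ((qn 1 4), [:: ], 12%N, [:: ]); ((qp 1 2), [:: 3], 19%N, [:: ]); ((qn 1 2), [:: ], 19%N, [:: 3]); ((qp 1 2), [:: 5], 19%N, [:: ]); ((qp 1 1), [:: 4], 19%N, [:: ]); ((qp 1 2), [:: ], 21%N, [:: 0]); ((qp 1 2), [:: 6], 20%N, [:: ]); ((qn 1 2), [:: 6], 21%N, [:: ]); ((qp 1 4), [:: 0], 22%N, [:: ]); ((qn 1 2), [:: ], 19%N, [:: 4]); ((qp 1 2), [:: ], 21%N, [:: 3]); ((qn 1 4), [:: ], 21%N, [:: 7]); ((qn 1 4), [:: ], 22%N, [:: 0]); ((qp 1 4), [:: 7], 21%N, [:: ]); ((qp 1 4), [:: 3], 22%N, [:: ]); ((qn 1 4), [:: ], 22%N, [:: 3])];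
 [:: ((qn 1 2), [:: ], 0%N, [:: ]); ((qp 1 2), [:: ], 19%N, [:: ]); ((qn 1 2), [:: ], 18%N, [:: ]); ((qp 1 2), [:: ], 18%N, [:: 0]); ((qn 1 2), [:: 2], 18%N, [:: ]); ((qp 1 2), [:: ], 13%N, [:: ]); ((qn 1 2), [:: 1], 18%N, [:: ]); ((qp 1 2), [:: ], 14%N, [:: ]); ((qn 1 2), [:: 4], 19%N, [:: ]); ((qp 1 2), [:: ], 18%N, [:: 1]); ((qn 1 2), [:: 0], 19%N, [:: ]); ((qn 1 2), [:: ], 1%N, [:: ]); ((qp 1 2), [:: ], 18%N, [:: 5]); ((qn 1 2), [:: 7], 20%N, [:: ]); ((qp 1 1), [:: ], 18%N, [:: 3]); ((qn 1 2), [:: 1], 19%N, [:: ]); ((qn 1 2), [:: ], 22%N, [:: 0]); ((qp 1 1), [:: 4], 21%N, [:: ]); ((qp 1 2), [:: 7], 21%N, [:: ]); ((qn 1 2), [:: ], 22%N, [:: 3])];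
 [:: ((qp 1 2), [:: 3], 20%N, [:: ]); ((qp 1 2), [:: ], 5%N, [:: ]); ((qn 1 1), [:: 0], 18%N, [:: ]); ((qp 1 2), [:: ], 9%N, [:: ]); ((qp 1 4), [:: ], 10%N, [:: ]); ((qp 1 4), [:: ], 12%N, [:: ]); ((qn 1 2), [:: ], 19%N, [:: 8]); ((qn 1 2), [:: ], 20%N, [:: ]); ((qn 1 1), [:: 3], 21%N, [:: ]); ((qp 1 2), [:: ], 21%N, [:: 0]); ((qn 1 2), [:: 6], 21%N, [:: ]); ((qp 1 4), [:: 0], 22%N, [:: ]); ((qp 1 2), [:: ], 21%N, [:: 3]); ((qn 1 4), [:: ], 21%N, [:: 7]); ((qp 1 4), [:: ], 22%N, [:: 0]); ((qn 1 2), [:: 4], 21%N, [:: ]); ((qp 1 2), [:: 4], 20%N, [:: ]); ((qn 1 4), [:: 7], 21%N, [:: ]); ((qp 1 4), [:: ], 22%N, [:: 3]); ((qn 1 4), [:: 3], 22%N, [:: ])];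
 [:: ((qn 1 2), [:: ], 9%N, [:: ]); ((qp 1 1), [:: 0], 18%N, [:: ]); ((qn 1 4), [:: ], 10%N, [:: ]); ((qn 1 4), [:: ], 12%N, [:: ]); ((qn 1 2), [:: ], 13%N, [:: ]); ((qp 1 2), [:: 1], 18%N, [:: ]); ((qn 1 2), [:: ], 14%N, [:: ]); ((qp 1 2), [:: ], 19%N, [:: ]); ((qp 1 2), [:: 4], 19%N, [:: ]); ((qp 1 2), [:: ], 20%N, [:: ]); ((qp 1 1), [:: 3], 21%N, [:: ]); ((qn 1 2), [:: ], 5%N, [:: ]); ((qn 1 2), [:: 3], 20%N, [:: ]); ((qp 1 2), [:: ], 19%N, [:: 8]); ((qn 1 2), [:: ], 21%N, [:: 0]); ((qp 1 2), [:: 6], 21%N, [:: ]); ((qn 1 4), [:: 0], 22%N, [:: ]); ((qn 1 2), [:: 0], 19%N, [:: ]); ((qn 1 2), [:: ], 1%N, [:: ]); ((qp 1 2), [:: ], 18%N, [:: 5]); ((qp 1 2), [:: 7], 20%N, [:: ]); ((qn 1 2), [:: 1], 19%N, [:: ]); ((qn 1 2), [:: ], 21%N, [:: 3]); ((qp 1 4), [:: ], 21%N, [:: 7]); ((qp 1 4), [:: ], 22%N, [:: 0]); ((qn 1 2), [:: 4], 21%N, [:: ]); ((qp 1 2), [:: 4], 20%N, [:: ]); ((qn 1 4), [:: 7], 21%N, [:: ]); ((qp 1 4), [:: ], 22%N, [:: 3]); ((qp 1 4), [:: 3], 22%N, [:: ])];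
 [:: ((qn 1 1), [:: 0], 18%N, [:: ]); ((qp 1 1), [:: ], 19%N, [:: 0])];
 [:: ((qp 1 1), [:: 0], 18%N, [:: ]); ((qn 1 2), [:: ], 0%N, [:: ]); ((qp 1 2), [:: ], 18%N, [:: ]); ((qn 1 2), [:: ], 18%N, [:: 0]); ((qn 1 2), [:: ], 18%N, [:: 1]); ((qn 1 2), [:: ], 3%N, [:: ]); ((qp 1 2), [:: 5], 18%N, [:: ]); ((qn 1 2), [:: ], 19%N, [:: 0]); ((qp 1 2), [:: 2], 18%N, [:: ]); ((qp 1 2), [:: ], 19%N, [:: 1]); ((qp 1 2), [:: 0], 19%N, [:: ]); ((qp 1 2), [:: ], 1%N, [:: ]); ((qn 1 2), [:: ], 18%N, [:: 5]); ((qp 1 2), [:: 1], 19%N, [:: ])];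
 [:: ((qp 1 2), [:: ], 3%N, [:: ]); ((qp 1 2), [:: 5], 18%N, [:: ]); ((qn 1 2), [:: ], 19%N, [:: 0]); ((qn 1 2), [:: ], 19%N, [:: 1]); ((qp 1 2), [:: 0], 19%N, [:: ]); ((qp 1 2), [:: ], 1%N, [:: ]); ((qn 1 2), [:: ], 18%N, [:: 5]); ((qp 1 2), [:: 1], 19%N, [:: ])];
 [:: ((qp 1 2), [:: 0], 18%N, [:: ]); ((qp 1 2), [:: ], 10%N, [:: ]); ((qp 1 2), [:: ], 11%N, [:: ]); ((qn 1 2), [:: 1], 18%N, [:: ]); ((qp 1 2), [:: ], 13%N, [:: ]); ((qp 1 2), [:: ], 14%N, [:: ]); ((qn 1 2), [:: 3], 19%N, [:: ]); ((qn 1 2), [:: ], 19%N, [:: ]); ((qp 1 1), [:: ], 19%N, [:: 3]); ((qn 1 2), [:: 4], 19%N, [:: ]); ((qp 1 2), [:: 0], 19%N, [:: ]); ((qp 1 2), [:: ], 1%N, [:: ]); ((qn 1 2), [:: ], 18%N, [:: 5]); ((qn 1 2), [:: 7], 20%N, [:: ]); ((qn 1 2), [:: 6], 20%N, [:: ]); ((qp 1 2), [:: 1], 19%N, [:: ]); ((qn 1 2), [:: ], 21%N, [:: 0]); ((qn 1 2), [:: ], 21%N, [:: 3]); ((qp 1 2), [:: 6], 21%N, [:: ]); ((qn 1 2), [:: ], 22%N, [:: 0]); ((qp 1 2), [:: 7], 21%N, [:: ]); ((qn 1 2), [:: ], 22%N, [:: 3])];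
 [:: ((qn 1 4), [:: 0], 22%N, [:: ]); ((qn 3 4), [:: ], 10%N, [:: ]); ((qn 1 2), [:: ], 4%N, [:: ]); ((qn 1 2), [:: 0], 18%N, [:: ]); ((qn 1 2), [:: ], 11%N, [:: ]); ((qp 1 4), [:: ], 12%N, [:: ]); ((qp 1 2), [:: 3], 19%N, [:: ]); ((qp 1 2), [:: ], 19%N, [:: ]); ((qn 1 2), [:: ], 19%N, [:: 3]); ((qp 1 2), [:: 5], 19%N, [:: ]); ((qp 1 2), [:: 6], 20%N, [:: ]); ((qp 1 2), [:: ], 19%N, [:: 4]); ((qp 1 2), [:: ], 21%N, [:: 0]); ((qp 1 2), [:: ], 21%N, [:: 3]); ((qp 1 4), [:: ], 21%N, [:: 7]); ((qn 1 2), [:: 6], 21%N, [:: ]); ((qp 1 4), [:: ], 22%N, [:: 0]); ((qn 1 4), [:: 7], 21%N, [:: ]); ((qn 1 4), [:: 3], 22%N, [:: ]); ((qp 1 4), [:: ], 22%N, [:: 3])];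
 [:: ((qp 1 4), [:: ], 22%N, [:: 0]); ((qn 1 4), [:: ], 12%N, [:: ]); ((qp 1 2), [:: ], 18%N, [:: ]); ((qn 1 2), [:: ], 0%N, [:: ]); ((qp 1 2), [:: ], 4%N, [:: ]); ((qp 1 4), [:: ], 10%N, [:: ]); ((qn 1 2), [:: ], 18%N, [:: 0]); ((qp 1 2), [:: 2], 18%N, [:: ]); ((qn 1 2), [:: ], 13%N, [:: ]); ((qp 1 2), [:: 1], 18%N, [:: ]); ((qn 1 2), [:: ], 14%N, [:: ]); ((qn 1 2), [:: ], 19%N, [:: 3]); ((qp 1 2), [:: 4], 19%N, [:: ]); ((qp 1 2), [:: 5], 19%N, [:: ]); ((qp 1 2), [:: 7], 20%N, [:: ]); ((qn 1 2), [:: ], 18%N, [:: 1]); ((qn 1 4), [:: 7], 21%N, [:: ]); ((qp 1 4), [:: 0], 22%N, [:: ]); ((qp 1 2), [:: 0], 19%N, [:: ]); ((qp 1 2), [:: ], 1%N, [:: ]); ((qn 1 2), [:: ], 18%N, [:: 5]); ((qp 1 2), [:: 1], 19%N, [:: ]); ((qn 1 2), [:: ], 19%N, [:: 4]); ((qn 1 4), [:: ], 21%N, [:: 7]); ((qp 1 4), [:: ], 22%N, [:: 3]); ((qp 1 4), [:: 3], 22%N, [:: ])];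
 [:: ((qp 1 2), [:: ], 18%N, [:: ]); ((qn 1 2), [:: ], 0%N, [:: ]); ((qn 1 2), [:: 0], 18%N, [:: ]); ((qp 1 1), [:: ], 9%N, [:: ]); ((qp 1 2), [:: ], 10%N, [:: ]); ((qp 1 2), [:: ], 11%N, [:: ]); ((qn 1 2), [:: ], 18%N, [:: 0]); ((qp 1 2), [:: 2], 18%N, [:: ]); ((qn 1 2), [:: ], 13%N, [:: ]); ((qp 1 2), [:: 1], 18%N, [:: ]); ((qn 1 2), [:: ], 14%N, [:: ]); ((qn 1 2), [:: 3], 19%N, [:: ]); ((qn 1 2), [:: ], 19%N, [:: ]); ((qp 1 2), [:: 4], 19%N, [:: ]); ((qp 1 1), [:: ], 19%N, [:: 6]); ((qn 1 2), [:: ], 18%N, [:: 1]); ((qn 1 1), [:: 3], 21%N, [:: ]); ((qp 1 2), [:: ], 21%N, [:: 0]); ((qn 1 2), [:: 6], 20%N, [:: ]); ((qn 1 2), [:: 6], 21%N, [:: ]); ((qp 1 2), [:: 0], 19%N, [:: ]); ((qp 1 2), [:: ], 1%N, [:: ]); ((qn 1 2), [:: ], 18%N, [:: 5]); ((qp 1 2), [:: 7], 20%N, [:: ]); ((qp 1 2), [:: 1], 19%N, [:: ]); ((qp 1 2), [:: ], 21%N, [:: 3]); ((qp 1 2), [:: ], 22%N, [:: 0]); ((qn 1 1), [:: 4], 21%N, [:: ]); ((qn 1 2), [:: 7], 21%N, [:: ]); ((qp 1 2), [:: ], 22%N, [:: 3])];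
 [:: ((qp 1 4), [:: ], 10%N, [:: ]); ((qn 1 2), [:: ], 9%N, [:: ]); ((qp 1 4), [:: ], 12%N, [:: ]); ((qp 1 2), [:: ], 13%N, [:: ]); ((qn 1 2), [:: 1], 18%N, [:: ]); ((qp 1 2), [:: ], 14%N, [:: ]); ((qp 1 2), [:: ], 20%N, [:: ]); ((qn 1 2), [:: ], 19%N, [:: ]); ((qn 1 2), [:: 4], 19%N, [:: ]); ((qp 1 1), [:: 3], 21%N, [:: ]); ((qn 1 2), [:: ], 5%N, [:: ]); ((qn 1 2), [:: 3], 20%N, [:: ]); ((qp 1 1), [:: ], 19%N, [:: 7]); ((qp 1 2), [:: ], 19%N, [:: 8]); ((qn 1 2), [:: ], 21%N, [:: 0]); ((qp 1 2), [:: 6], 21%N, [:: ]); ((qp 1 4), [:: 0], 22%N, [:: ]); ((qp 1 2), [:: 0], 19%N, [:: ]); ((qp 1 2), [:: ], 1%N, [:: ]); ((qn 1 2), [:: ], 18%N, [:: 5]); ((qn 1 2), [:: 7], 20%N, [:: ]); ((qp 1 2), [:: 1], 19%N, [:: ]); ((qn 1 2), [:: ], 21%N, [:: 3]); ((qn 1 4), [:: ], 21%N, [:: 7]); ((qn 1 4), [:: ], 22%N, [:: 0]); ((qp 1 2), [:: 4], 21%N, [:: ]); ((qn 1 2), [:: 4], 20%N, [:: ]); ((qp 1 4), [:: 7], 21%N, [:: ]); ((qn 1 4), [:: ], 22%N, [:: 3]); ((qn 1 4), [:: 3], 22%N, [:: ])];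
 [:: ((qn 1 4), [:: ], 12%N, [:: ]); ((qn 1 2), [:: ], 9%N, [:: ]); ((qp 1 2), [:: 0], 18%N, [:: ]); ((qn 3 4), [:: ], 10%N, [:: ]); ((qn 1 2), [:: ], 11%N, [:: ]); ((qp 1 2), [:: ], 20%N, [:: ]); ((qp 1 2), [:: 3], 19%N, [:: ]); ((qp 1 2), [:: ], 5%N, [:: ]); ((qn 1 2), [:: 3], 20%N, [:: ]); ((qp 1 2), [:: ], 19%N, [:: 8]); ((qp 1 2), [:: 6], 20%N, [:: ]); ((qn 1 4), [:: 0], 22%N, [:: ]); ((qp 1 4), [:: ], 21%N, [:: 7]); ((qn 1 4), [:: ], 22%N, [:: 0]); ((qp 1 2), [:: 4], 21%N, [:: ]); ((qn 1 2), [:: 4], 20%N, [:: ]); ((qp 1 4), [:: 7], 21%N, [:: ]); ((qn 1 4), [:: ], 22%N, [:: 3]); ((qp 1 4), [:: 3], 22%N, [:: ])];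
 [:: ((qn 1 1), [:: 0], 18%N, [:: ]); ((qp 1 1), [:: ], 21%N, [:: 0])];
 [:: ((qn 1 2), [:: ], 0%N, [:: ]); ((qp 1 2), [:: ], 18%N, [:: ]); ((qp 1 1), [:: 0], 18%N, [:: ]); ((qn 1 2), [:: ], 18%N, [:: 0]); ((qp 1 2), [:: 2], 18%N, [:: ]); ((qn 1 2), [:: ], 18%N, [:: 1]); ((qp 1 1), [:: ], 21%N, [:: 1])];
 [:: ((qn 1 2), [:: ], 18%N, [:: ]); ((qn 1 2), [:: ], 0%N, [:: ]); ((qp 1 1), [:: ], 9%N, [:: ]); ((qp 1 1), [:: ], 10%N, [:: ]); ((qp 1 1), [:: ], 11%N, [:: ]); ((qp 1 2), [:: ], 18%N, [:: 0]); ((qn 1 2), [:: 2], 18%N, [:: ]); ((qn 1 1), [:: 3], 19%N, [:: ]); ((qp 1 1), [:: 6], 18%N, [:: ]); ((qn 1 1), [:: 6], 20%N, [:: ]); ((qp 1 2), [:: ], 18%N, [:: 1]); ((qn 1 1), [:: ], 21%N, [:: 0]); ((qn 1 1), [:: ], 21%N, [:: 1]); ((qp 1 1), [:: ], 18%N, [:: 3])];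
 [:: ((qp 1 2), [:: ], 11%N, [:: ]); ((qp 1 2), [:: ], 10%N, [:: ]); ((qp 1 2), [:: 0], 18%N, [:: ]); ((qn 1 2), [:: 3], 19%N, [:: ]); ((qn 1 2), [:: ], 21%N, [:: 0]); ((qn 1 2), [:: 6], 20%N, [:: ]); ((qp 1 2), [:: 6], 21%N, [:: ]); ((qp 1 2), [:: ], 21%N, [:: 3])];
 [:: ((qn 1 2), [:: ], 0%N, [:: ]); ((qn 1 2), [:: 2], 18%N, [:: ]); ((qp 1 2), [:: ], 13%N, [:: ]); ((qn 1 2), [:: 1], 18%N, [:: ]); ((qp 1 2), [:: ], 12%N, [:: ]); ((qp 1 2), [:: ], 14%N, [:: ]); ((qn 1 2), [:: ], 10%N, [:: ]); ((qn 1 2), [:: ], 18%N, [:: ]); ((qp 1 2), [:: ], 18%N, [:: 0]); ((qp 1 2), [:: ], 19%N, [:: ]); ((qn 1 2), [:: 4], 19%N, [:: ]); ((qp 1 2), [:: ], 18%N, [:: 1]); ((qn 1 2), [:: 0], 22%N, [:: ]); ((qn 1 2), [:: 0], 19%N, [:: ]); ((qn 1 2), [:: ], 1%N, [:: ]); ((qp 1 2), [:: ], 18%N, [:: 5]); ((qn 1 2), [:: 7], 20%N, [:: ]); ((qp 1 1), [:: ], 18%N, [:: 3]); ((qn 1 2), [:: 1], 19%N, [:: ]); ((qp 1 1), [:: ], 21%N, [:: 4]); ((qp 1 2), [:: ], 21%N, [:: 7]); ((qn 1 2), [:: 3], 22%N, [:: ])];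
 [:: ((qp 1 1), [:: ], 9%N, [:: ]); ((qn 1 2), [:: ], 0%N, [:: ]); ((qn 1 2), [:: ], 13%N, [:: ]); ((qp 1 2), [:: ], 18%N, [:: ]); ((qn 1 2), [:: 0], 18%N, [:: ]); ((qp 1 1), [:: ], 10%N, [:: ]); ((qp 1 2), [:: ], 11%N, [:: ]); ((qn 1 2), [:: ], 18%N, [:: 0]); ((qn 1 2), [:: ], 12%N, [:: ]); ((qp 1 2), [:: 2], 18%N, [:: ]); ((qp 1 2), [:: 1], 18%N, [:: ]); ((qn 1 2), [:: ], 14%N, [:: ]); ((qn 1 2), [:: ], 19%N, [:: ]); ((qn 1 2), [:: 3], 19%N, [:: ]); ((qp 1 2), [:: 4], 19%N, [:: ]); ((qn 1 2), [:: 6], 20%N, [:: ]); ((qp 1 1), [:: 6], 19%N, [:: ]); ((qp 1 2), [:: ], 21%N, [:: 0]); ((qn 1 2), [:: 6], 21%N, [:: ]); ((qp 1 2), [:: 7], 20%N, [:: ]); ((qn 1 2), [:: ], 18%N, [:: 1]); ((qp 1 2), [:: 0], 22%N, [:: ]); ((qp 1 2), [:: 0], 19%N, [:: ]); ((qp 1 2), [:: ], 1%N, [:: ]); ((qn 1 2), [:: ], 18%N, [:: 5]); ((qp 1 2), [:: 1], 19%N, [:: ]); ((qn 1 1), [:: ], 21%N, [:: 4]); ((qn 1 2), [:: ], 21%N, [:: 3]); ((qn 1 2), [:: ], 21%N, [:: 7]); ((qp 1 2), [:: 3], 22%N, [:: ])];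
 [:: ((qn 1 1), [:: ], 0%N, [:: ]); ((qp 1 1), [:: ], 9%N, [:: ]); ((qp 1 2), [:: 0], 18%N, [:: ]); ((qp 1 2), [:: ], 10%N, [:: ]); ((qp 1 2), [:: ], 11%N, [:: ]); ((qn 1 2), [:: 3], 19%N, [:: ]); ((qn 1 2), [:: 6], 20%N, [:: ]); ((qn 1 2), [:: ], 21%N, [:: 0]); ((qp 1 2), [:: 6], 21%N, [:: ]); ((qp 1 1), [:: ], 18%N, [:: 3]); ((qn 1 2), [:: ], 21%N, [:: 3])];
 [:: ((qp 1 2), [:: ], 13%N, [:: ]); ((qn 1 2), [:: 1], 18%N, [:: ]); ((qp 1 2), [:: ], 12%N, [:: ]); ((qp 1 2), [:: ], 14%N, [:: ]); ((qp 1 2), [:: ], 10%N, [:: ]); ((qn 1 2), [:: ], 19%N, [:: ]); ((qn 1 2), [:: 4], 19%N, [:: ]); ((qp 1 2), [:: 0], 19%N, [:: ]); ((qp 1 2), [:: ], 1%N, [:: ]); ((qn 1 2), [:: ], 18%N, [:: 5]); ((qp 1 2), [:: 1], 19%N, [:: ]); ((qp 1 2), [:: ], 21%N, [:: 7]); ((qn 1 2), [:: 7], 20%N, [:: ]); ((qn 1 2), [:: 0], 22%N, [:: ]); ((qn 1 2), [:: 3], 22%N, [:: ])];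
 [:: ((qn 1 2), [:: ], 12%N, [:: ]); ((qn 1 2), [:: 0], 18%N, [:: ]); ((qp 1 2), [:: ], 11%N, [:: ]); ((qn 1 2), [:: ], 13%N, [:: ]); ((qp 1 2), [:: 1], 18%N, [:: ]); ((qn 1 2), [:: ], 14%N, [:: ]); ((qn 1 2), [:: 3], 19%N, [:: ]); ((qp 1 2), [:: ], 19%N, [:: ]); ((qp 1 2), [:: 4], 19%N, [:: ]); ((qn 1 2), [:: 0], 19%N, [:: ]); ((qn 1 2), [:: ], 1%N, [:: ]); ((qp 1 2), [:: ], 18%N, [:: 5]); ((qp 1 2), [:: 6], 20%N, [:: ]); ((qp 1 2), [:: ], 21%N, [:: 0]); ((qp 1 2), [:: ], 21%N, [:: 3]); ((qn 1 2), [:: 1], 19%N, [:: ]); ((qn 1 2), [:: 6], 21%N, [:: ]); ((qn 1 2), [:: ], 21%N, [:: 7]); ((qp 1 2), [:: 7], 20%N, [:: ]); ((qp 1 2), [:: 0], 22%N, [:: ]); ((qp 1 2), [:: 3], 22%N, [:: ])];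
 [:: ((qn 1 1), [:: 0], 18%N, [:: ]); ((qp 1 1), [:: ], 22%N, [:: 0])];
 [:: ((qn 1 2), [:: ], 19%N, [:: ]); ((qp 1 2), [:: 0], 18%N, [:: ]); ((qp 1 2), [:: ], 9%N, [:: ]); ((qp 1 2), [:: ], 10%N, [:: ]); ((qp 1 2), [:: ], 11%N, [:: ]); ((qp 1 2), [:: ], 12%N, [:: ]); ((qp 1 2), [:: ], 13%N, [:: ]); ((qn 1 2), [:: 1], 18%N, [:: ]); ((qp 1 2), [:: ], 14%N, [:: ]); ((qn 1 2), [:: 3], 19%N, [:: ]); ((qn 1 2), [:: 4], 19%N, [:: ]); ((qp 1 2), [:: ], 20%N, [:: 0]); ((qp 1 2), [:: ], 6%N, [:: ]); ((qn 1 2), [:: 8], 18%N, [:: ]); ((qn 1 2), [:: 6], 20%N, [:: ]); ((qn 1 2), [:: ], 20%N, [:: ]); ((qn 1 2), [:: 7], 20%N, [:: ]); ((qn 1 1), [:: ], 21%N, [:: 0]); ((qn 1 2), [:: ], 21%N, [:: 1]); ((qp 1 2), [:: ], 20%N, [:: 1]); ((qp 1 2), [:: 0], 19%N, [:: ]); ((qp 1 2), [:: ], 1%N, [:: ]); ((qn 1 2), [:: ], 18%N, [:: 5]); ((qp 1 2), [:: 1], 19%N, [:: ]); ((qn 1 2), [:: ], 22%N, [:: 0])];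
 [:: ((qn 1 2), [:: ], 6%N, [:: ]); ((qp 1 2), [:: ], 20%N, [:: ]); ((qp 1 1), [:: 7], 18%N, [:: ]); ((qp 1 2), [:: 8], 18%N, [:: ]); ((qn 1 2), [:: ], 19%N, [:: ]); ((qn 1 2), [:: 0], 18%N, [:: ]); ((qn 1 2), [:: ], 9%N, [:: ]); ((qn 1 2), [:: ], 10%N, [:: ]); ((qn 1 2), [:: ], 11%N, [:: ]); ((qp 1 2), [:: ], 12%N, [:: ]); ((qp 1 2), [:: ], 13%N, [:: ]); ((qn 1 2), [:: 1], 18%N, [:: ]); ((qp 1 2), [:: ], 14%N, [:: ]); ((qp 1 2), [:: 3], 19%N, [:: ]); ((qn 1 2), [:: 4], 19%N, [:: ]); ((qn 1 2), [:: ], 20%N, [:: 0]); ((qn 1 2), [:: 7], 20%N, [:: ]); ((qp 1 2), [:: 6], 20%N, [:: ]); ((qp 1 1), [:: ], 21%N, [:: 0]); ((qp 1 2), [:: ], 21%N, [:: 1]); ((qn 1 2), [:: ], 20%N, [:: 1]); ((qp 1 2), [:: 0], 19%N, [:: ]); ((qp 1 2), [:: ], 1%N, [:: ]); ((qn 1 2), [:: ], 18%N, [:: 5]); ((qn 1 1), [:: ], 18%N, [:: 3]); ((qp 1 2), [:: 1], 19%N, [:: ]); ((qn 1 2), [:: ], 22%N, [:: 0])];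
 [:: ((qp 1 2), [:: ], 13%N, [:: ]); ((qn 1 2), [:: 1], 18%N, [:: ]); ((qp 1 2), [:: ], 14%N, [:: ]); ((qn 1 2), [:: ], 19%N, [:: ]); ((qn 1 2), [:: 4], 19%N, [:: ]); ((qn 1 2), [:: 7], 20%N, [:: ]); ((qp 1 2), [:: 0], 19%N, [:: ]); ((qp 1 2), [:: ], 1%N, [:: ]); ((qn 1 2), [:: ], 18%N, [:: 5]); ((qn 1 1), [:: ], 18%N, [:: 3]); ((qp 1 2), [:: 1], 19%N, [:: ]); ((qn 1 2), [:: ], 22%N, [:: 0]); ((qp 1 2), [:: 7], 21%N, [:: ]); ((qp 1 2), [:: ], 22%N, [:: 3])];
 [:: ((qp 1 2), [:: ], 9%N, [:: ]); ((qp 1 4), [:: ], 10%N, [:: ]); ((qn 1 1), [:: 0], 18%N, [:: ]); ((qp 1 4), [:: ], 12%N, [:: ]); ((qp 1 2), [:: ], 7%N, [:: ]); ((qn 1 2), [:: ], 20%N, [:: ]); ((qn 1 2), [:: 8], 19%N, [:: ]); ((qp 1 2), [:: ], 20%N, [:: 4]); ((qp 1 2), [:: ], 20%N, [:: 3]); ((qp 1 2), [:: ], 21%N, [:: 0]); ((qn 1 2), [:: 6], 21%N, [:: ]); ((qp 1 4), [:: 0], 22%N, [:: ]); ((qn 1 2), [:: ], 21%N, [:: 4]); ((qn 1 2), [:: ], 21%N, [:: 3]); ((qn 1 4), [:: ], 21%N, [:: 7]); ((qp 1 4), [:: ], 22%N, [:: 0]); ((qn 1 4), [:: 7], 21%N,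 [:: ]); ((qn 1 4), [:: ], 22%N, [:: 3]); ((qp 1 4), [:: 3], 22%N, [:: ])];
 [:: ((qp 1 2), [:: ], 1%N, [:: ]); ((qp 1 2), [:: 0], 19%N, [:: ]); ((qn 1 2), [:: ], 9%N, [:: ]); ((qn 1 4), [:: ], 10%N, [:: ]); ((qp 3 4), [:: ], 12%N, [:: ]); ((qp 1 2), [:: ], 13%N, [:: ]); ((qn 1 2), [:: 1], 18%N, [:: ]); ((qp 1 2), [:: ], 14%N, [:: ]); ((qn 1 2), [:: ], 18%N, [:: 5]); ((qn 1 2), [:: ], 19%N, [:: ]); ((qn 1 2), [:: 4], 19%N, [:: ]); ((qp 1 1), [:: 7], 19%N, [:: ]); ((qp 1 2), [:: 8], 19%N, [:: ]); ((qn 1 2), [:: ], 20%N, [:: 3]); ((qn 1 2), [:: ], 7%N, [:: ]); ((qp 1 2), [:: ], 20%N, [:: ]); ((qn 1 2), [:: ], 21%N, [:: 0]); ((qp 1 2), [:: ], 21%N, [:: 3]); ((qp 1 2), [:: 6], 21%N, [:: ]); ((qn 1 2), [:: ], 20%N, [:: 4]); ((qn 1 4), [:: 0], 22%N, [:: ]); ((qn 1 2), [:: 7], 20%N, [:: ]); ((qp 1 2), [:: 1], 19%N, [:: ]); ((qp 1 2), [:: ], 21%N, [:: 4]); ((qp 1 4), [:: ], 21%N, [:: 7]); ((qp 1 4), [:: ], 22%N, [:: 0]); ((qn 1 4), [:: 7], 21%N, [:: ]); ((qn 1 4), [:: ], 22%N, [:: 3]); ((qn 1 4), [:: 3], 22%N,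 [:: ])];
 [:: ((qn 1 2), [:: 4], 19%N, [:: ]); ((qp 1 2), [:: ], 13%N, [:: ]); ((qn 1 2), [:: 1], 18%N, [:: ]); ((qp 1 1), [:: ], 12%N, [:: ]); ((qp 1 2), [:: ], 14%N, [:: ]); ((qn 1 2), [:: ], 19%N, [:: ]); ((qp 1 2), [:: 0], 19%N, [:: ]); ((qp 1 2), [:: ], 1%N, [:: ]); ((qn 1 2), [:: ], 18%N, [:: 5]); ((qp 1 2), [:: 1], 19%N, [:: ]); ((qn 1 2), [:: 7], 20%N, [:: ]); ((qn 1 2), [:: ], 22%N, [:: 0]); ((qp 1 2), [:: 7], 21%N, [:: ]); ((qn 1 2), [:: ], 22%N, [:: 3])];
 [:: ((qp 1 2), [:: 1], 19%N, [:: ]); ((qn 1 2), [:: 0], 18%N, [:: ]); ((qn 1 2), [:: ], 4%N, [:: ]); ((qn 1 2), [:: ], 0%N, [:: ]); ((qn 1 4), [:: ], 10%N, [:: ]); ((qn 1 2), [:: ], 11%N, [:: ]); ((qp 1 2), [:: ], 18%N, [:: ]); ((qn 1 2), [:: ], 18%N, [:: 0]); ((qn 1 4), [:: ], 12%N, [:: ]); ((qp 1 2), [:: 1], 18%N, [:: ]); ((qp 1 2), [:: ], 13%N, [:: ]); ((qn 1 2), [:: ], 14%N, [:: ]); ((qp 1 2), [:: 2], 18%N, [:: ]); ((qn 1 1), [:: ], 18%N, [:: 3]); ((qp 1 2), [:: ], 1%N, [:: ]); ((qp 1 2), [:: 0], 19%N, [:: ]); ((qn 1 2), [:: ], 18%N,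 [:: 5]); ((qp 1 2), [:: 3], 19%N, [:: ]); ((qn 1 2), [:: ], 19%N, [:: 3]); ((qp 1 2), [:: 4], 19%N, [:: ]); ((qp 1 2), [:: 5], 19%N, [:: ]); ((qp 1 2), [:: 6], 20%N, [:: ]); ((qn 1 4), [:: ], 21%N, [:: 7]); ((qn 1 2), [:: ], 19%N, [:: 4]); ((qn 1 2), [:: ], 18%N, [:: 1]); ((qp 1 2), [:: 7], 20%N, [:: ]); ((qp 1 2), [:: ], 21%N, [:: 3]); ((qp 1 2), [:: ], 21%N, [:: 0]); ((qn 1 2), [:: 6], 21%N, [:: ]); ((qp 1 4), [:: 0], 22%N, [:: ]); ((qp 1 4), [:: ], 22%N, [:: 0]); ((qn 1 4), [:: 7], 21%N, [:: ]); ((qp 1 4), [:: ], 22%N, [:: 3]); ((qp 1 4), [:: 3], 22%N, [:: ])];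
 [:: ((qn 1 2), [:: 3], 19%N, [:: ]); ((qp 1 2), [:: ], 0%N, [:: ]); ((qp 1 2), [:: ], 4%N, [:: ]); ((qp 1 2), [:: ], 18%N, [:: 0]); ((qp 1 4), [:: ], 12%N, [:: ]); ((qn 1 2), [:: ], 18%N, [:: ]); ((qn 1 2), [:: 0], 18%N, [:: ]); ((qp 1 4), [:: ], 10%N, [:: ]); ((qp 1 2), [:: ], 11%N, [:: ]); ((qn 1 2), [:: 2], 18%N, [:: ]); ((qn 1 1), [:: 1], 18%N, [:: ]); ((qp 1 1), [:: ], 14%N, [:: ]); ((qn 1 2), [:: ], 19%N, [:: ]); ((qp 1 2), [:: ], 19%N, [:: 3]); ((qn 1 2), [:: 5], 19%N, [:: ]); ((qn 1 1), [:: 4], 19%N, [:: ]); ((qn 1 2), [:: ], 21%N, [:: 0]); ((qn 1 2), [:: 6], 20%N, [:: ]); ((qp 1 2), [:: 6], 21%N, [:: ]); ((qp 1 2), [:: ], 18%N, [:: 1]); ((qn 1 4), [:: 0], 22%N, [:: ]); ((qp 1 2), [:: ], 19%N, [:: 4]); ((qn 1 2), [:: ], 21%N, [:: 3]); ((qp 1 4), [:: ], 21%N, [:: 7]); ((qn 1 4), [:: 7], 21%N, [:: ]); ((qn 1 4), [:: 3], 22%N, [:: ]); ((qp 1 4), [:: ], 22%N, [:: 0]); ((qp 1 4), [:: ], 22%N, [:: 3])];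
 [:: ((qp 1 1), [:: 0], 18%N, [:: ]); ((qp 1 1), [:: ], 20%N, [:: 0]); ((qn 1 1), [:: ], 21%N, [:: 0]); ((qn 1 1), [:: ], 22%N, [:: 0])];
 [:: ((qp 1 2), [:: 4], 19%N, [:: ]); ((qn 1 2), [:: ], 13%N, [:: ]); ((qn 1 2), [:: ], 9%N, [:: ]); ((qp 1 2), [:: 1], 18%N, [:: ]); ((qn 1 2), [:: ], 12%N, [:: ]); ((qn 1 2), [:: ], 14%N, [:: ]); ((qn 1 2), [:: 0], 18%N, [:: ]); ((qn 1 2), [:: ], 10%N, [:: ]); ((qn 1 2), [:: ], 11%N, [:: ]); ((qp 1 2), [:: 3], 19%N, [:: ]); ((qp 1 2), [:: ], 19%N, [:: ]); ((qn 1 2), [:: ], 20%N, [:: 0]); ((qn 1 2), [:: ], 6%N, [:: ]); ((qp 1 2), [:: 8], 18%N, [:: ]); ((qp 1 2), [:: 7], 20%N, [:: ]); ((qp 1 2), [:: 6], 20%N, [:: ]); ((qp 1 2), [:: ], 20%N, [:: ]); ((qp 1 1), [:: ], 21%N, [:: 0]); ((qn 1 2), [:: ], 21%N, [:: 1]); ((qp 1 2), [:: ], 20%N, [:: 1]); ((qn 1 2), [:: 0], 19%N, [:: ]); ((qn 1 2), [:: ], 1%N, [:: ]); ((qp 1 2), [:: ], 18%N, [:: 5]); ((qn 1 2), [:: 1], 19%N, [:: ]); ((qp 1 2), [:: ], 22%N, [:: 0])];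
 [:: ((qn 1 2), [:: ], 9%N, [:: ]); ((qn 1 2), [:: ], 12%N, [:: ]); ((qp 1 2), [:: 0], 18%N, [:: ]); ((qn 1 2), [:: ], 10%N, [:: ]); ((qn 1 2), [:: ], 11%N, [:: ]); ((qn 1 2), [:: ], 13%N, [:: ]); ((qp 1 2), [:: 1], 18%N, [:: ]); ((qn 1 2), [:: ], 14%N, [:: ]); ((qp 1 2), [:: ], 19%N, [:: ]); ((qp 1 2), [:: 3], 19%N, [:: ]); ((qp 1 2), [:: 4], 19%N, [:: ]); ((qp 1 2), [:: 8], 18%N, [:: ]); ((qn 1 2), [:: ], 20%N, [:: 0]); ((qp 1 2), [:: ], 6%N, [:: ]); ((qp 1 2), [:: 6], 20%N, [:: ]); ((qp 1 2), [:: ], 20%N, [:: ]); ((qp 1 2), [:: 7], 20%N, [:: ]); ((qp 1 2), [:: ], 21%N, [:: 1]); ((qn 1 2), [:: ], 20%N, [:: 1]); ((qn 1 2), [:: 0], 19%N, [:: ]); ((qn 1 2), [:: ], 1%N, [:: ]); ((qp 1 2), [:: ], 18%N, [:: 5]); ((qn 1 2), [:: 1], 19%N, [:: ]); ((qp 1 2), [:: ], 22%N, [:: 0])];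
 [:: ((qp 1 2), [:: 7], 20%N, [:: ]); ((qp 1 2), [:: 4], 19%N, [:: ]); ((qn 1 2), [:: ], 13%N, [:: ]); ((qp 1 2), [:: 1], 18%N, [:: ]); ((qn 1 2), [:: ], 14%N, [:: ]); ((qn 1 2), [:: 0], 18%N, [:: ]); ((qn 1 2), [:: ], 10%N, [:: ]); ((qn 1 2), [:: ], 11%N, [:: ]); ((qp 1 2), [:: 3], 19%N, [:: ]); ((qp 1 2), [:: ], 19%N, [:: ]); ((qp 1 2), [:: 6], 20%N, [:: ]); ((qn 1 2), [:: 0], 19%N, [:: ]); ((qn 1 2), [:: ], 1%N, [:: ]); ((qp 1 2), [:: ], 18%N, [:: 5]); ((qp 1 1), [:: ], 20%N, [:: 3]); ((qn 1 2), [:: 1], 19%N, [:: ]); ((qp 1 2), [:: ], 21%N, [:: 0]); ((qn 1 2), [:: ], 21%N, [:: 3]); ((qn 1 2), [:: 6], 21%N, [:: ]); ((qp 1 2), [:: ], 22%N, [:: 0]); ((qn 1 2), [:: 7], 21%N, [:: ]); ((qn 1 2), [:: ], 22%N, [:: 3])];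
 [:: ((qn 1 2), [:: 0], 19%N, [:: ]); ((qn 1 2), [:: ], 1%N, [:: ]); ((qp 1 1), [:: 0], 18%N, [:: ]); ((qn 1 2), [:: ], 9%N, [:: ]); ((qp 1 4), [:: ], 10%N, [:: ]); ((qn 3 4), [:: ], 12%N, [:: ]); ((qn 1 2), [:: ], 13%N, [:: ]); ((qp 1 2), [:: 1], 18%N, [:: ]); ((qn 1 2), [:: ], 14%N, [:: ]); ((qp 1 2), [:: ], 18%N, [:: 5]); ((qp 1 2), [:: ], 19%N, [:: ]); ((qp 1 2), [:: 4], 19%N, [:: ]); ((qp 1 2), [:: 8], 19%N, [:: ]); ((qn 1 2), [:: ], 7%N, [:: ]); ((qp 1 2), [:: ], 20%N, [:: ]); ((qn 1 2), [:: ], 20%N, [:: 3]); ((qp 1 2), [:: ], 20%N, [:: 4]); ((qn 1 2), [:: 1], 19%N, [:: ]); ((qn 1 2), [:: ], 21%N, [:: 0]); ((qp 1 2), [:: ], 21%N, [:: 3]); ((qn 1 2), [:: ], 21%N, [:: 4]); ((qp 1 2), [:: 6], 21%N, [:: ]); ((qp 1 4), [:: 0], 22%N, [:: ]); ((qp 1 2), [:: 7], 20%N, [:: ]); ((qn 1 4), [:: ], 21%N, [:: 7]); ((qn 1 4), [:: ], 22%N, [:: 0]); ((qp 1 4), [:: 7], 21%N, [:: ]); ((qp 1 4), [:: ], 22%N, [:: 3]); ((qp 1 4), [:: 3], 22%N, [:: ])];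
 [:: ((qp 1 2), [:: 0], 18%N, [:: ]); ((qn 1 2), [:: ], 9%N, [:: ]); ((qn 3 4), [:: ], 10%N, [:: ]); ((qn 1 2), [:: ], 11%N, [:: ]); ((qn 1 4), [:: ], 12%N, [:: ]); ((qp 1 2), [:: 3], 19%N, [:: ]); ((qp 1 2), [:: 8], 19%N, [:: ]); ((qp 1 2), [:: ], 7%N, [:: ]); ((qp 1 2), [:: ], 20%N, [:: ]); ((qn 1 2), [:: ], 20%N, [:: 3]); ((qn 1 2), [:: ], 20%N, [:: 4]); ((qp 1 2), [:: 6], 20%N, [:: ]); ((qp 1 4), [:: ], 21%N, [:: 7]); ((qn 1 4), [:: 0], 22%N, [:: ]); ((qp 1 2), [:: ], 21%N, [:: 4]); ((qn 1 4), [:: ], 22%N, [:: 0]); ((qp 1 4), [:: 7], 21%N, [:: ]); ((qp 1 4), [:: ], 22%N, [:: 3]); ((qn 1 4), [:: 3], 22%N, [:: ])];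
 [:: ((qn 1 2), [:: 0], 19%N, [:: ]); ((qn 1 2), [:: ], 1%N, [:: ]); ((qp 1 2), [:: 0], 18%N, [:: ]); ((qn 1 2), [:: ], 10%N, [:: ]); ((qn 1 2), [:: ], 11%N, [:: ]); ((qn 1 1), [:: ], 18%N, [:: 0]); ((qp 1 1), [:: ], 15%N, [:: ]); ((qn 1 2), [:: ], 13%N, [:: ]); ((qp 1 2), [:: 1], 18%N, [:: ]); ((qn 1 2), [:: ], 14%N, [:: ]); ((qp 1 2), [:: ], 18%N, [:: 5]); ((qp 1 2), [:: 3], 19%N, [:: ]); ((qp 1 2), [:: ], 19%N, [:: ]); ((qn 1 1), [:: ], 19%N, [:: 3]); ((qp 1 2), [:: 4], 19%N, [:: ]); ((qp 1 2), [:: 6], 20%N, [:: ]); ((qp 1 2), [:: ], 21%N, [:: 0]); ((qp 1 2), [:: ], 21%N, [:: 3]); ((qn 1 2), [:: 1], 19%N, [:: ]); ((qn 1 2), [:: 6], 21%N, [:: ]); ((qp 1 2), [:: 7], 20%N, [:: ]); ((qp 1 2), [:: ], 22%N, [:: 0]); ((qn 1 2), [:: 7], 21%N, [:: ]); ((qp 1 2), [:: ], 22%N, [:: 3])];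
 [:: ((qn 1 2), [:: ], 19%N, [:: ]); ((qp 1 2), [:: ], 0%N, [:: ]); ((qp 1 2), [:: ], 4%N, [:: ]); ((qn 1 2), [:: ], 18%N, [:: ]); ((qn 1 2), [:: 0], 18%N, [:: ]); ((qp 3 4), [:: ], 10%N, [:: ]); ((qp 1 2), [:: ], 11%N, [:: ]); ((qp 1 2), [:: ], 18%N, [:: 0]); ((qn 1 4), [:: ], 12%N, [:: ]); ((qn 1 2), [:: 2], 18%N, [:: ]); ((qp 1 1), [:: ], 16%N, [:: ]); ((qn 1 2), [:: 3], 19%N, [:: ]); ((qp 1 2), [:: ], 19%N, [:: 3]); ((qn 1 2), [:: 5], 19%N, [:: ]); ((qn 1 2), [:: 6], 20%N, [:: ]); ((qn 1 2), [:: ], 21%N, [:: 0]); ((qn 1 2), [:: ], 18%N, [:: 1]); ((qp 1 2), [:: 6], 21%N, [:: ]); ((qp 1 4), [:: 7], 21%N, [:: ]); ((qp 1 4), [:: 0], 22%N, [:: ]); ((qn 1 2), [:: ], 19%N, [:: 4]); ((qn 1 2), [:: ], 21%N, [:: 3]); ((qn 1 4), [:: ], 21%N, [:: 7]); ((qp 1 4), [:: 3], 22%N, [:: ]); ((qn 1 4), [:: ], 22%N, [:: 0]); ((qn 1 4), [:: ], 22%N, [:: 3])];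
 [:: ((qn 1 2), [:: ], 18%N, [:: ]); ((qp 1 2), [:: ], 0%N, [:: ]); ((qp 1 2), [:: ], 4%N, [:: ]); ((qp 1 1), [:: ], 8%N, [:: ]); ((qn 1 1), [:: ], 9%N, [:: ]); ((qn 1 4), [:: ], 10%N, [:: ]); ((qp 1 2), [:: ], 18%N, [:: 0]); ((qp 1 4), [:: ], 12%N, [:: ]); ((qn 1 2), [:: 2], 18%N, [:: ]); ((qn 1 2), [:: ], 13%N, [:: ]); ((qn 1 2), [:: 1], 18%N, [:: ]); ((qp 1 2), [:: ], 14%N, [:: ]); ((qp 1 2), [:: ], 19%N, [:: 3]); ((qn 1 2), [:: 4], 19%N, [:: ]); ((qn 1 2), [:: 5], 19%N, [:: ]); ((qp 1 2), [:: ], 18%N, [:: 1]); ((qn 1 4), [:: 0], 22%N, [:: ]); ((qn 1 2), [:: 0], 19%N, [:: ]); ((qn 1 2), [:: ], 1%N, [:: ]); ((qp 1 2), [:: ], 18%N, [:: 5]); ((qn 1 2), [:: 7], 20%N, [:: ]); ((qn 1 2), [:: 1], 19%N, [:: ]); ((qp 1 2), [:: ], 19%N, [:: 4]); ((qp 1 4), [:: ], 21%N, [:: 7]); ((qn 1 4), [:: ], 22%N, [:: 0]); ((qp 1 4), [:: 7], 21%N, [:: ]); ((qn 1 4), [:: ], 22%N, [:: 3]); ((qn 1 4), [:: 3], 22%N, [:: ])]].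

Definition B3_relsQ := @gbist rat 3 (ords 3).
Lemma B3_Erels : bist_rels 3 = map (pmapR (@ratr algC)) B3_relsQ.
Proof. by rewrite bist_conv (@enum_ords 3) ?map_gbist //; vm_compute. Qed.
Definition B3_bidx (k : 'I_14) : quad 3 := qd 2 (nth 0 B3_btab k).
Lemma B3_c1 : map val (ords 14) = iota 0 14. Proof. by vm_compute. Qed.
Lemma B3_c2 : map val (ords 3) = iota 0 3. Proof. by vm_compute. Qed.
Lemma B3_c3 : all (fun rr => all (fun r => m2eqb (phi (mkrep B3_reps rr) r) (m2zero _)) B3_relsQ) (map fst B3_J).
Proof. vm_compute. reflexivity. Qed.
Lemma B3_c4 : all (fun k0 => all (fun k => foldr (fun j acc => mkL B3_L k0 j * Qv B3_bidx (mkrep B3_reps) B3_J j k + acc) 0 (iota 0 (size B3_J))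
                       == (k == k0)%:R) (ords 14)) (ords 14).
Proof. vm_compute. reflexivity. Qed.
Lemma B3_c5 : all (fun i => checkI B3_relsQ (gsub (gtensor rat i)
         (flatten [seq gscale (mkA B3_atab i k) (gtensor rat (B3_bidx k)) | k <- ords 14])) (mkT B3_ttab i)) (allI 3).
Proof. vm_compute. reflexivity. Qed.
Lemma B3_main : span_dim (bist_rels 3) (@tensor2_entries 3) 14.
Proof. exact: (main_span B3_Erels B3_c1 B3_c2 B3_c3 B3_c4 B3_c5). Qed.

Local Close Scope ring_scope.

Theorem lemma7p3 :
  span_dim (bist_rels 3) (@tensor2_entries 3) 14 /\
  span_dim (orth_rels 2) (@tensor2_entries 2) 10.
Proof. exact: (conj B3_main O2_main). Qed.
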